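(* For $j=1,2$ let $\mathscr T_j$ be a leafless, locally finite rooted directed tree with set of branching vertices $V^{(j)}_\prec$, and let $S^{(j)}_{\lambda,1}$ be the Dirichlet shift with parameter $q=1$ on $\mathscr T_j$. Then $S^{(1)}_{\lambda,1}$ is unitarily equivalent to $S^{(2)}_{\lambda,1}$ if and only if $$\sum_{v\in V^{(1)}_\prec}\big(\mathrm{card}(\mathsf{Chi}(v))-1\big)=\sum_{v\in V^{(2)}_\prec}\big(\mathrm{card}(\mathsf{Chi}(v))-1\big)$$ (as cardinal numbers, possibly infinite).
   Context: A directed tree $\mathscr T=(V,\mathcal E)$ is a directed graph with no circuits, connected, in which every non-root vertex has a unique parent; rooted means a unique vertex $\mathsf{root}$ has no parent. $\mathsf{Chi}(v)=\{u:(v,u)\in\mathcal E\}$; $\mathsf{Chi}^{\langle n\rangle}$ denotes the $n$-fold iterate. Locally finite: each $\mathsf{Chi}(v)$ finite; leafless: each $\mathsf{Chi}(v)$ nonempty; $V$ is countably infinite. Depth $n_v$: the unique $n$ with $v\in\mathsf{Chi}^{\langle n\rangle}(\mathsf{root})$. Branching vertices: $V_\prec=\{v:\mathrm{card}(\mathsf{Chi}(v))\geqslant2\}$. The weighted shift on $\ell^2(V)$ (orthonormal basis $\{e_u\}$) with weights $\{\lambda_u\}_{u\neq\mathsf{root}}$ is $S_\lambda e_v=\sum_{u\in\mathsf{Chi}(v)}\lambda_ue_u$. For real $q\geqslant1$ the Dirichlet shift $S_{\lambda,q}$ has weights $\lambda_{u,q}=\frac{1}{\sqrt{\mathrm{card}(\mathsf{Chi}(v))}}\sqrt{\frac{n_v+q}{n_v+1}}$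 for $u\in\mathsf{Chi}(v)$. *)

(* Defs.v *)
From Stdlib Require Import Reals List ClassicalEpsilon.
Open Scope R_scope.

Definition C : Type := (R * R)%type.
Definition C0 : C := (0, 0).
Definition Cadd (a b : C) : C := (fst a + fst b, snd a + snd b).
Definition Cmul (a b : C) : C :=
  (fst a * fst b - snd a * snd b, fst a * snd b + snd a * fst b).
Definition RtoC (r : R) : C := (r, 0).
Definition Cnorm2 (a : C) : R := fst a * fst a + snd a * snd a.

(* A rooted directed tree, given by its parent map: par v = Some w iff (w,v)
   is an edge.  Every non-root vertex has a unique parent, the root has none,
   and every vertex is reached from the root (connectedness; this also rules
   out circuits).  The vertex set is countably infinite (standing assumption),
   witnessed by a bijective enumeration. *)
Record rtree : Type := {
  V : Type;
  root : V;
  par : V -> option V;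
  par_root : par root = None;
  par_nonroot : forall v, v <> root -> par v <> None;
  conn : forall v, exists n : nat,
      (fix anc (k : nat) (x : V) : option V :=
         match k with
         | O => Some x
         | S k' => match anc k' x with Some w => par w | None => None end
         end) n v = Some root;
  enum : nat -> V;
  enum_inj : forall m n, enum m = enum n -> m = n;
  enum_surj : forall v, exists n, enum n = v
}.

Fixpoint anc (T : rtree) (k : nat) (x : V T) : option (V T) :=
  match k with
  | O => Some x
  | S k' => match anc T k' x with Some w => par T w | None => None end
  end.

Definition Chi (T : rtree) (v : V T) (u : V T) : Prop := par T u = Some v.

Definition locally_finite (T : rtree) : Prop :=
  forall v, exists l : list (V T), forall u, In u l <-> Chi T v u.

Definition leafless (T : rtree) : Prop :=
  forall v, exists u, Chi T v u.

(* card (Chi v): length of a duplicate-free list enumerating Chi v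
   (well defined when T is locally finite). *)
Definition card_Chi (T : rtree) (v : V T) : nat :=
  length (epsilon (inhabits nil)
            (fun l : list (V T) => NoDup l /\ forall u, In u l <-> Chi T v u)).

Definition depth (T : rtree) (v : V T) : nat :=
  epsilon (inhabits O) (fun n => anc T n v = Some (root T)).

Definition branching (T : rtree) (v : V T) : Prop := (2 <= card_Chi T v)%nat.

(* weight lambda_{u,q} for u in Chi(v) *)
Definition dweight (T : rtree) (q : R) (v : V T) : R :=
  / sqrt (INR (card_Chi T v)) *
  sqrt ((INR (depth T v) + q) / (INR (depth T v) + 1)).

(* S_{lambda,q} acting on functions V -> C:
   (S f)(u) = lambda_u f(parent u), (S f)(root) = 0;
   equivalently S e_v = sum_{u in Chi v} lambda_u e_u. *)
Definition dirichlet_shift (T : rtree) (q : R) (f : V T -> C) (u : V T) : C :=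
  match par T u with
  | None => C0
  | Some v => Cmul (RtoC (dweight T q v)) (f v)
  end.

(* ||f||^2 = l  (sum over V of |f(v)|^2, via the enumeration; terms are
   nonnegative so the order is irrelevant) *)
Definition l2norm2 (T : rtree) (f : V T -> C) (l : R) : Prop :=
  infinite_sum (fun n => Cnorm2 (f (enum T n))) l.

Definition in_l2 (T : rtree) (f : V T -> C) : Prop := exists l, l2norm2 T f l.

Definition unitarily_equivalent (T1 T2 : rtree)
    (A : (V T1 -> C) -> (V T1 -> C)) (B : (V T2 -> C) -> (V T2 -> C)) : Prop :=
  exists U : (V T1 -> C) -> (V T2 -> C),
    (forall f, in_l2 T1 f -> in_l2 T2 (U f)) /\
    (forall (a : C) f g, in_l2 T1 f -> in_l2 T1 g ->
       forall u, U (fun x => Cadd (Cmul a (f x)) (g x)) u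
                 = Cadd (Cmul a (U f u)) (U g u)) /\
    (forall f l, in_l2 T1 f -> l2norm2 T1 f l -> l2norm2 T2 (U f) l) /\
    (forall g, in_l2 T2 g -> exists f, in_l2 T1 f /\ forall u, U f u = g u) /\
    (forall f, in_l2 T1 f -> forall u, U (A f) u = B (U f) u).

(* realised as the disjoint union of sets of size card Chi v - 1 *)
Definition excess (T : rtree) : Type :=
  { p : V T * nat | branching T (fst p) /\ (snd p < card_Chi T (fst p) - 1)%nat }.

Definition same_card (A B : Type) : Prop :=
  exists (f : A -> B) (g : B -> A),
    (forall a, g (f a) = a) /\ (forall b, f (g b) = b).

(* Main.v *)
From Stdlib Require Import Reals Lra Lia List Classical ClassicalEpsilon FunctionalExtensionality ProofIrrelevance Wf_nat.
Require Import Defs.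
Import ListNotations.
Open Scope R_scope.

Definition lsum {A} (f : A -> R) (l : list A) : R := fold_right (fun x s => f x + s) 0 l.

Lemma lsum_nil {A} (f : A -> R) : lsum f [] = 0. Proof. reflexivity. Qed.
Lemma lsum_cons {A} (f : A -> R) a l : lsum f (a :: l) = f a + lsum f l. Proof. reflexivity. Qed.
Lemma lsum_app {A} (f : A -> R) l1 l2 : lsum f (l1 ++ l2) = lsum f l1 + lsum f l2.
Proof. induction l1; simpl; [lra|]. unfold lsum in *. simpl. rewrite IHl1. lra. Qed.
Lemma lsum_ext {A} (f g : A -> R) l : (forall x, In x l -> f x = g x) -> lsum f l = lsum g l.
Proof. induction l; intros H; simpl; auto. unfold lsum in *; simpl. rewrite H by (left; auto). rewrite IHl; auto. intros; apply H; right; auto. Qed.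
Lemma lsum_plus {A} (f g : A -> R) l : lsum (fun x => f x + g x) l = lsum f l + lsum g l.
Proof. induction l; unfold lsum in *; simpl; [lra|]. rewrite IHl. lra. Qed.
Lemma lsum_minus {A} (f g : A -> R) l : lsum (fun x => f x - g x) l = lsum f l - lsum g l.
Proof. induction l; unfold lsum in *; simpl; [lra|]. rewrite IHl. lra. Qed.
Lemma lsum_scal {A} (c : R) (f : A -> R) l : lsum (fun x => c * f x) l = c * lsum f l.
Proof. induction l; unfold lsum in *; simpl; [lra|]. rewrite IHl. lra. Qed.
Lemma lsum_scalr {A} (c : R) (f : A -> R) l : lsum (fun x => f x * c) l = lsum f l * c.
Proof. induction l; unfold lsum in *; simpl; [lra|]. rewrite IHl. lra. Qed.
Lemma lsum_zero {A} (f : A -> R) l : (forall x, In x l -> f x = 0) -> lsum f l = 0.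
Proof. intros H. rewrite (lsum_ext f (fun _ => 0)) by auto. induction l; unfold lsum in *; simpl; auto. rewrite IHl; try lra. intros; apply H; right; auto. Qed.
Lemma lsum_const0 {A} l : lsum (fun _ : A => 0) l = 0. Proof. apply lsum_zero; auto. Qed.
Lemma lsum_map {A B} (f : B -> R) (g : A -> B) l : lsum f (map g l) = lsum (fun x => f (g x)) l.
Proof. induction l; unfold lsum in *; simpl; auto. rewrite IHl; auto. Qed.
Lemma lsum_flat_map {A B} (f : B -> R) (g : A -> list B) l : lsum f (flat_map g l) = lsum (fun x => lsum f (g x)) l.
Proof. induction l; simpl; auto. rewrite lsum_app, IHl. reflexivity. Qed.
Lemma lsum_nonneg {A} (f : A -> R) l : (forall x, In x l -> 0 <= f x) -> 0 <= lsum f l.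
Proof. induction l; intros H; unfold lsum in *; simpl; [lra|]. assert (0 <= f a) by (apply H; left; auto). assert (0 <= fold_right (fun x s => f x + s) 0 l) by (apply IHl; intros; apply H; right; auto). lra. Qed.
Lemma lsum_le {A} (f g : A -> R) l : (forall x, In x l -> f x <= g x) -> lsum f l <= lsum g l.
Proof. induction l; intros H; unfold lsum in *; simpl; [lra|]. assert (f a <= g a) by (apply H; left; auto). assert (fold_right (fun x s => f x + s) 0 l <= fold_right (fun x s => g x + s) 0 l) by (apply IHl; intros; apply H; right; auto). lra. Qed.
Lemma lsum_swap {A B} (f : A -> B -> R) l1 l2 : lsum (fun a => lsum (fun b => f a b) l2) l1 = lsum (fun b => lsum (fun a => f a b) l1) l2.
Proof. induction l1. - rewrite lsum_nil. symmetry. apply lsum_zero. auto. - rewrite lsum_cons, IHl1, <- lsum_plus. reflexivity. Qed.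

Definition cdec {A} (x y : A) : {x = y} + {x <> y} := excluded_middle_informative (x = y).

Lemma lsum_remove {A} (f : A -> R) (a : A) l : NoDup l -> In a l ->
  lsum f l = f a + lsum f (remove cdec a l).
Proof.
  induction l as [|b l IH]; intros Hn Hi; [destruct Hi|]. inversion Hn; subst.
  cbn [remove]. destruct (cdec a b) as [e|ne].
  - subst. rewrite notin_remove by auto. rewrite lsum_cons. auto.
  - destruct Hi as [e|Hi]; [congruence|]. rewrite !lsum_cons, IH by auto. lra.
Qed.

Lemma lsum_incl {A} (f : A -> R) l1 l2 : NoDup l1 -> incl l1 l2 -> (forall x, In x l2 -> 0 <= f x) -> lsum f l1 <= lsum f l2.
Proof.
  revert l2; induction l1 as [|a l1 IH]; intros l2 Hn Hi Hp.
  - simpl. apply lsum_nonneg; auto.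
  - inversion Hn; subst.
    assert (NoDup (nodup cdec l2)) by apply NoDup_nodup.
    assert (lsum f (nodup cdec l2) <= lsum f l2).
    { clear - Hp. induction l2; cbn [nodup]; [simpl; lra|]. destruct (in_dec cdec a l2).
      - rewrite lsum_cons. assert (0 <= f a) by (apply Hp; left; auto). assert (lsum f (nodup cdec l2) <= lsum f l2) by (apply IHl2; intros; apply Hp; right; auto). lra.
      - rewrite !lsum_cons. assert (lsum f (nodup cdec l2) <= lsum f l2) by (apply IHl2; intros; apply Hp; right; auto). lra. }
    assert (Ha : In a (nodup cdec l2)) by (apply nodup_In; apply Hi; left; auto).
    rewrite (lsum_remove f a (nodup cdec l2)) in H0 by auto.
    rewrite lsum_cons.
    assert (lsum f l1 <= lsum f (remove cdec a (nodup cdec l2))).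
    { apply IH; auto.
      - intros x Hx. apply in_in_remove. intro; subst; auto. apply nodup_In. apply Hi; right; auto.
      - intros x Hx. apply in_remove in Hx. destruct Hx as [Hx _]. apply nodup_In in Hx. auto. }
    lra.
Qed.

Lemma NoDup_remove_c {A} (a : A) l : NoDup l -> NoDup (remove cdec a l).
Proof.
  induction l as [|b l IH]; intros Hn; cbn [remove]; [constructor|]. inversion Hn; subst.
  destruct (cdec a b); auto. constructor; auto. intro Hx. apply in_remove in Hx. tauto.
Qed.

Lemma lsum_support {A} (f : A -> R) S l : NoDup S -> NoDup l -> incl S l -> (forall x, In x l -> ~ In x S -> f x = 0) -> lsum f l = lsum f S.
Proof.
  revert l; induction S as [|a S IH]; intros l HS Hl Hi H0.
  - simpl. apply lsum_zero. intros x Hx; apply H0; auto.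
  - inversion HS; subst. rewrite (lsum_remove f a l) by (auto; apply Hi; left; auto).
    rewrite lsum_cons. f_equal. apply IH; auto.
    + apply NoDup_remove_c; auto.
    + intros x Hx. apply in_in_remove. intro; subst; auto. apply Hi; right; auto.
    + intros x Hx Hn. apply in_remove in Hx. apply H0; [tauto|]. intros [e|e]; subst; tauto.
Qed.

Lemma NoDup_app_c {A} (l1 l2 : list A) : NoDup l1 -> NoDup l2 -> (forall x, In x l1 -> ~ In x l2) -> NoDup (l1 ++ l2).
Proof.
  induction l1; intros H1 H2 H; simpl; auto. inversion H1; subst. constructor.
  - rewrite in_app_iff. intros [h|h]; [tauto|]. apply (H a); [left|]; auto.
  - apply IHl1; auto. intros x Hx; apply H; right; auto.
Qed.

Lemma NoDup_flat_map_c {A B} (g : A -> list B) l : NoDup l -> (forall x, In x l -> NoDup (g x)) ->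
  (forall x y z, In x l -> In y l -> In z (g x) -> In z (g y) -> x = y) -> NoDup (flat_map g l).
Proof.
  induction l as [|a l IH]; intros Hn Hg Hd; simpl; [constructor|]. inversion Hn; subst.
  apply NoDup_app_c; auto.
  - apply Hg; left; auto.
  - apply IH; auto. intros; apply Hg; right; auto. intros x y z Hx Hy; apply Hd; right; auto.
  - intros z Hz Hz'. apply in_flat_map in Hz'. destruct Hz' as [y [Hy Hzy]].
    assert (a = y) by (apply (Hd a y z); auto; [left|right]; auto). subst; tauto.
Qed.

Lemma NoDup_map_inj {A B} (f : A -> B) l : (forall x y, f x = f y -> x = y) -> NoDup l -> NoDup (map f l).
Proof. intros Hi Hn; induction Hn; simpl; constructor; auto. rewrite in_map_iff. intros [y [e Hy]]. apply Hi in e; subst; auto. Qed.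

Record exh {X} (A : nat -> list X) : Prop := {
  exh_nd : forall N, NoDup (A N);
  exh_mono : forall N, incl (A N) (A (S N));
  exh_cov : forall x, exists N, In x (A N) }.

Lemma exh_le {X} (A : nat -> list X) : exh A -> forall N M, (N <= M)%nat -> incl (A N) (A M).
Proof. intros H N M Hl. induction Hl. apply incl_refl. eapply incl_tran; eauto. apply exh_mono; auto. Qed.

Lemma exh_list {X} (A : nat -> list X) : exh A -> forall l, exists N, incl l (A N).
Proof.
  intros H l. induction l as [|a l IH]. exists O; intros x []. destruct IH as [N HN].
  destruct (exh_cov A H a) as [M HM]. exists (max N M). intros x [e|Hx].
  - subst. apply (exh_le A H M); [lia|auto].
  - apply (exh_le A H N); [lia|auto].
Qed.

Lemma psum_mono {X} (A : nat -> list X) (g : X -> R) : exh A -> (forall x, 0 <= g x) ->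
  forall N M, (N <= M)%nat -> lsum g (A N) <= lsum g (A M).
Proof. intros H Hg N M Hl. apply lsum_incl; auto. apply exh_nd; auto. apply exh_le; auto. Qed.

Lemma mono_cv_le (u : nat -> R) l : (forall n, u n <= u (S n)) -> Un_cv u l -> forall n, u n <= l.
Proof.
  intros Hm Hc n. destruct (Rle_or_lt (u n) l) as [h|h]; auto. exfalso.
  destruct (Hc (u n - l)) as [N HN]; [lra|].
  assert (forall k, u n <= u (n + k)%nat). { induction k. rewrite Nat.add_0_r; lra. rewrite Nat.add_succ_r. specialize (Hm (n+k)%nat). lra. }
  specialize (HN (n + N)%nat ltac:(lia)). specialize (H N). unfold Rdist in HN. rewrite Rabs_right in HN.
  assert (u (n+N)%nat = u (N+n)%nat) by (f_equal; lia). lra.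
  assert (u (n+N)%nat = u (N+n)%nat) by (f_equal; lia). lra.
Qed.

Lemma exh_cv {X} (A B : nat -> list X) (g : X -> R) l : exh A -> exh B -> (forall x, 0 <= g x) ->
  Un_cv (fun N => lsum g (A N)) l -> Un_cv (fun N => lsum g (B N)) l.
Proof.
  intros HA HB Hg Hc.
  assert (Hle : forall N, lsum g (A N) <= l).
  { apply mono_cv_le; auto. intros; apply psum_mono; auto. }
  intros e He. destruct (Hc e He) as [N0 HN0]. specialize (HN0 N0 (le_n _)).
  destruct (exh_list B HB (A N0)) as [M0 HM0]. exists M0. intros n Hn.
  destruct (exh_list A HA (B n)) as [M1 HM1].
  assert (lsum g (B n) <= lsum g (A M1)) by (apply lsum_incl; auto; apply exh_nd; auto).
  assert (lsum g (A N0) <= lsum g (B M0)) by (apply lsum_incl; auto; apply exh_nd; auto).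
  assert (lsum g (B M0) <= lsum g (B n)) by (apply psum_mono; auto).
  pose proof (Hle M1). pose proof (Hle N0). unfold Rdist in *.
  rewrite Rabs_left1 in HN0 by lra. rewrite Rabs_left1 by lra. lra.
Qed.

Lemma exh_map {X Y} (A : nat -> list X) (phi : X -> Y) (psi : Y -> X) :
  (forall x, psi (phi x) = x) -> (forall y, phi (psi y) = y) -> exh A -> exh (fun N => map phi (A N)).
Proof.
  intros H1 H2 HA. constructor.
  - intros N. apply NoDup_map_inj; [|apply exh_nd; auto]. intros x y e. rewrite <- (H1 x), <- (H1 y), e. auto.
  - intros N y Hy. rewrite in_map_iff in *. destruct Hy as [x [e Hx]]. exists x; split; auto. apply exh_mono; auto.
  - intros y. destruct (exh_cov A HA (psi y)) as [N HN]. exists N. rewrite in_map_iff. exists (psi y); auto.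
Qed.

Lemma sum_f_R0_lsum (a : nat -> R) N : sum_f_R0 a N = lsum a (seq 0 (S N)).
Proof.
  induction N. simpl. unfold lsum; simpl; lra. rewrite seq_S, lsum_app, lsum_cons, lsum_nil. simpl sum_f_R0. rewrite IHN. replace (0 + S N)%nat with (S N) by lia. lra.
Qed.

Lemma enum_exh {X} (e : nat -> X) : (forall m n, e m = e n -> m = n) -> (forall x, exists n, e n = x) ->
  exh (fun N => map e (seq 0 (S N))).
Proof.
  intros Hi Hs. constructor.
  - intros N. apply NoDup_map_inj; auto. apply seq_NoDup.
  - intros N x Hx. rewrite in_map_iff in *. destruct Hx as [n [e1 Hn]]. exists n; split; auto. rewrite in_seq in *. lia.
  - intros x. destruct (Hs x) as [n Hn]. exists n. rewrite in_map_iff. exists n; split; auto. rewrite in_seq. lia.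
Qed.

Lemma infinite_sum_exh {X} (e : nat -> X) (g : X -> R) (A : nat -> list X) l :
  (forall m n, e m = e n -> m = n) -> (forall x, exists n, e n = x) -> exh A -> (forall x, 0 <= g x) ->
  (infinite_sum (fun n => g (e n)) l <-> Un_cv (fun N => lsum g (A N)) l).
Proof.
  intros Hi Hs HA Hg. pose proof (enum_exh e Hi Hs) as HE.
  assert (Heq : forall N, sum_f_R0 (fun n => g (e n)) N = lsum g (map e (seq 0 (S N)))).
  { intros. rewrite sum_f_R0_lsum, lsum_map. auto. }
  unfold infinite_sum. split; intros H.
  - apply (exh_cv _ _ g l HE HA Hg). intros eps Heps. destruct (H eps Heps) as [N HN]. exists N. intros n Hn. rewrite <- Heq. apply HN; auto.
  - apply (exh_cv _ _ g l HA HE Hg) in H. intros eps Heps. destruct (H eps Heps) as [N HN]. exists N. intros n Hn. rewrite Heq. apply HN; auto.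
Qed.

Definition ch (T : rtree) (v : V T) : list (V T) :=
  epsilon (inhabits nil) (fun l : list (V T) => NoDup l /\ forall u, In u l <-> Chi T v u).

Lemma card_ch T v : card_Chi T v = length (ch T v). Proof. reflexivity. Qed.

Lemma ch_spec T : locally_finite T -> forall v, NoDup (ch T v) /\ forall u, In u (ch T v) <-> par T u = Some v.
Proof.
  intros Hlf v. unfold ch. apply epsilon_spec. destruct (Hlf v) as [l Hl].
  exists (nodup cdec l). split. apply NoDup_nodup. intros u. rewrite nodup_In. apply Hl.
Qed.

Lemma ch_nd T (Hlf : locally_finite T) v : NoDup (ch T v). Proof. apply ch_spec; auto. Qed.
Lemma ch_in T (Hlf : locally_finite T) v u : In u (ch T v) <-> par T u = Some v. Proof. apply ch_spec; auto. Qed.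

Lemma card_pos T (Hlf : locally_finite T) (Hll : leafless T) v : (1 <= card_Chi T v)%nat.
Proof.
  rewrite card_ch. destruct (Hll v) as [u Hu]. apply (ch_in T Hlf) in Hu.
  destruct (ch T v); [destruct Hu|]. simpl; lia.
Qed.

Lemma anc_S' T n x : anc T (S n) x = match par T x with Some w => anc T n w | None => None end.
Proof.
  induction n. simpl. destruct (par T x); auto.
  change (anc T (S (S n)) x) with (match anc T (S n) x with Some w => par T w | None => None end).
  rewrite IHn. destruct (par T x); auto.
Qed.

Lemma anc_fix T n x : anc T n x = (fix anc (k : nat) (x : V T) {struct k} : option (V T) :=
       match k with
       | 0%nat => Some x
       | S k' => match anc k' x with
                 | Some w => par T w
                 | None => None
                 end
       end) n x.
Proof. induction n. reflexivity. simpl. rewrite IHn. reflexivity. Qed.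

Lemma anc_conn T v : exists n, anc T n v = Some (root T).
Proof. destruct (conn T v) as [n H]. exists n. rewrite anc_fix. exact H. Qed.

Lemma anc_after T n x : anc T n x = Some (root T) -> forall k, anc T (S k + n) x = None.
Proof.
  intros H k. induction k.
  - simpl. rewrite H. apply par_root.
  - change (anc T (S (S k) + n) x) with (match anc T (S k + n) x with Some w => par T w | None => None end). rewrite IHk; auto.
Qed.

Lemma anc_uniq T n m x : anc T n x = Some (root T) -> anc T m x = Some (root T) -> n = m.
Proof.
  intros H1 H2. destruct (Nat.lt_trichotomy n m) as [h|[h|h]]; auto.
  - replace m with (S (m - n - 1) + n)%nat in H2 by lia. rewrite anc_after with (n:=n) in H2; auto. discriminate.
  - replace n with (S (n - m - 1) + m)%nat in H1 by lia. rewrite anc_after with (n:=m) in H1; auto. discriminate.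
Qed.

Lemma depth_spec T x : anc T (depth T x) x = Some (root T).
Proof. unfold depth. apply epsilon_spec. apply anc_conn. Qed.

Lemma depth_eq T x n : anc T n x = Some (root T) -> depth T x = n.
Proof. intros H. eapply anc_uniq; eauto. apply depth_spec. Qed.

Lemma depth_root T : depth T (root T) = O.
Proof. apply depth_eq. reflexivity. Qed.

Lemma depth_child T u v : par T u = Some v -> depth T u = S (depth T v).
Proof. intros H. apply depth_eq. rewrite anc_S', H. apply depth_spec. Qed.

Lemma depth_pos_par T u : depth T u <> O -> exists v, par T u = Some v.
Proof.
  intros H. destruct (par T u) eqn:E; eauto. exfalso. apply H.
  destruct (cdec u (root T)) as [e|ne]. subst; apply depth_root.
  exfalso. apply (par_nonroot T u ne E).
Qed.

Fixpoint Lv (T : rtree) (N : nat) : list (V T) :=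
  match N with O => [root T] | S N' => flat_map (ch T) (Lv T N') end.

Lemma Lv_in T (Hlf : locally_finite T) N x : In x (Lv T N) <-> depth T x = N.
Proof.
  revert x; induction N; intros x; simpl.
  - split. intros [e|[]]; subst; apply depth_root.
    intros H. left. pose proof (depth_spec T x) as D. rewrite H in D. simpl in D. congruence.
  - rewrite in_flat_map. split.
    + intros [v [Hv Hx]]. apply IHN in Hv. apply (ch_in T Hlf) in Hx. apply depth_child in Hx. lia.
    + intros H. destruct (depth_pos_par T x) as [v Hv]; [lia|]. exists v. split.
      apply IHN. apply depth_child in Hv. lia. apply (ch_in T Hlf); auto.
Qed.

Lemma Lv_nd T (Hlf : locally_finite T) N : NoDup (Lv T N).
Proof.
  induction N; simpl. constructor; [intros []|constructor].
  apply NoDup_flat_map_c; auto. intros; apply ch_nd; auto.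
  intros x y z _ _ Hx Hy. apply (ch_in T Hlf) in Hx, Hy. congruence.
Qed.

Lemma lsum_Lv_S T (h : V T -> R) N : lsum h (Lv T (S N)) = lsum (fun v => lsum h (ch T v)) (Lv T N).
Proof. simpl. apply lsum_flat_map. Qed.

Definition LU (T : rtree) (N : nat) : list (V T) := flat_map (Lv T) (seq 0 (S N)).

Lemma LU_exh T (Hlf : locally_finite T) : exh (LU T).
Proof.
  constructor.
  - intros N. apply NoDup_flat_map_c. apply seq_NoDup. intros; apply Lv_nd; auto.
    intros x y z _ _ Hx Hy. apply Lv_in in Hx, Hy; auto. congruence.
  - intros N x. unfold LU. rewrite !in_flat_map. intros [n [Hn Hx]]. exists n. split; auto. rewrite in_seq in *. lia.
  - intros x. exists (depth T x). unfold LU. rewrite in_flat_map. exists (depth T x). split. rewrite in_seq; lia. apply Lv_in; auto.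
Qed.

Lemma lsum_LU T (h : V T -> R) N : lsum h (LU T N) = lsum (fun n => lsum h (Lv T n)) (seq 0 (S N)).
Proof. apply lsum_flat_map. Qed.

Definition shR (T : rtree) (f : V T -> R) (u : V T) : R :=
  match par T u with None => 0 | Some v => f v / sqrt (INR (card_Chi T v)) end.

Lemma sqrt_k_sq T (Hlf : locally_finite T) (Hll : leafless T) v :
  sqrt (INR (card_Chi T v)) * sqrt (INR (card_Chi T v)) = INR (card_Chi T v) /\ 0 < sqrt (INR (card_Chi T v)).
Proof.
  pose proof (card_pos T Hlf Hll v). apply le_INR in H. simpl in H. split.
  apply sqrt_sqrt; lra. apply sqrt_lt_R0; lra.
Qed.

Lemma lsum_ch_const T (Hlf : locally_finite T) v (c : R) : lsum (fun _ => c) (ch T v) = INR (card_Chi T v) * c.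
Proof. rewrite card_ch. induction (ch T v). simpl. unfold lsum; simpl; lra. rewrite lsum_cons, IHl. simpl length. rewrite S_INR. ring. Qed.

Lemma shR_inner T (Hlf : locally_finite T) (Hll : leafless T) f g N :
  lsum (fun x => shR T f x * shR T g x) (Lv T (S N)) = lsum (fun v => f v * g v) (Lv T N).
Proof.
  rewrite lsum_Lv_S. apply lsum_ext. intros v _.
  rewrite (lsum_ext _ (fun _ => f v * g v / INR (card_Chi T v))).
  - rewrite lsum_ch_const; auto. destruct (sqrt_k_sq T Hlf Hll v). field. nra.
  - intros u Hu. apply (ch_in T Hlf) in Hu. unfold shR. rewrite Hu. destruct (sqrt_k_sq T Hlf Hll v).
    set (k := INR (card_Chi T v)) in *. set (s := sqrt k) in *. rewrite <- H. field. lra.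
Qed.

Definition nsum (f : nat -> R) (k : nat) : R := lsum f (seq 0 k).

Lemma nsum_S f k : nsum f (S k) = nsum f k + f k.
Proof. unfold nsum. rewrite seq_S, lsum_app, lsum_cons, lsum_nil. simpl. lra. Qed.
Lemma nsum_0 f : nsum f 0 = 0. Proof. reflexivity. Qed.
Lemma nsum_ext f g k : (forall p, (p < k)%nat -> f p = g p) -> nsum f k = nsum g k.
Proof. intros H. apply lsum_ext. intros p Hp. apply in_seq in Hp. apply H. lia. Qed.

Definition cH (j : nat) : R := / sqrt (INR (S j * S (S j))).
Definition hel (j p : nat) : R :=
  if Nat.leb p j then cH j else if Nat.eqb p (S j) then - INR (S j) * cH j else 0.

Lemma cH_prop j : 0 < cH j /\ cH j * cH j = / (INR (S j) * (INR (S j) + 1)).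
Proof.
  unfold cH. rewrite mult_INR. assert (0 < INR (S j)) by (apply lt_0_INR; lia).
  assert (INR (S (S j)) = INR (S j) + 1) by (rewrite S_INR; auto). rewrite H0.
  assert (0 < INR (S j) * (INR (S j) + 1)) by nra.
  split. apply Rinv_0_lt_compat, sqrt_lt_R0; auto.
  rewrite <- Rinv_mult. rewrite sqrt_sqrt; lra.
Qed.

Lemma hel_le j p : (p <= j)%nat -> hel j p = cH j.
Proof. intros H. unfold hel. apply Nat.leb_le in H. rewrite H. auto. Qed.
Lemma hel_S j : hel j (S j) = - INR (S j) * cH j.
Proof. unfold hel. replace (Nat.leb (S j) j) with false by (symmetry; apply Nat.leb_gt; lia). rewrite Nat.eqb_refl. auto. Qed.
Lemma hel_gt j p : (S j < p)%nat -> hel j p = 0.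
Proof. intros H. unfold hel. replace (Nat.leb p j) with false by (symmetry; apply Nat.leb_gt; lia).
  replace (Nat.eqb p (S j)) with false by (symmetry; apply Nat.eqb_neq; lia). auto. Qed.

Lemma nsum_const c k : nsum (fun _ => c) k = INR k * c.
Proof. induction k. unfold nsum; simpl; unfold lsum; simpl; lra. rewrite nsum_S, IHk, S_INR. ring. Qed.

Lemma hel_split G j k : (S (S j) <= k)%nat ->
  nsum (fun p => G p * hel j p) k = cH j * (nsum G (S j) - INR (S j) * G (S j)).
Proof.
  intros Hk. induction Hk.
  - rewrite nsum_S, hel_S. rewrite (nsum_ext _ (fun p => cH j * G p)).
    + unfold nsum at 1. rewrite lsum_scal. fold (nsum G (S j)). ring.
    + intros p Hp. rewrite hel_le by lia. ring.
  - rewrite nsum_S, IHHk, hel_gt by lia. ring.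
Qed.

Lemma hel_sum0 j k : (S (S j) <= k)%nat -> nsum (hel j) k = 0.
Proof.
  intros H. rewrite (nsum_ext _ (fun p => 1 * hel j p)) by (intros; ring).
  rewrite hel_split by auto. rewrite nsum_const. ring.
Qed.

Lemma hel_orth_lt j j' k : (j < j')%nat -> (S (S j') <= k)%nat -> nsum (fun p => hel j' p * hel j p) k = 0.
Proof.
  intros H1 H2. rewrite hel_split by lia. rewrite (nsum_ext _ (fun _ => cH j')).
  rewrite nsum_const, hel_le by lia. ring. intros p Hp. apply hel_le. lia.
Qed.

Lemma hel_orth j j' k : (S (S j) <= k)%nat -> (S (S j') <= k)%nat ->
  nsum (fun p => hel j p * hel j' p) k = if Nat.eqb j j' then 1 else 0.
Proof.
  intros H1 H2. destruct (Nat.lt_trichotomy j j') as [h|[h|h]].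
  - replace (Nat.eqb j j') with false by (symmetry; apply Nat.eqb_neq; lia).
    rewrite (nsum_ext _ (fun p => hel j' p * hel j p)) by (intros; ring). apply hel_orth_lt; auto.
  - subst. rewrite Nat.eqb_refl. rewrite hel_split by auto. rewrite (nsum_ext _ (fun _ => cH j')).
    rewrite nsum_const, hel_S. destruct (cH_prop j') as [_ E].
    transitivity (cH j' * cH j' * (INR (S j') * (INR (S j') + 1))). ring. rewrite E. apply Rinv_l. apply Rgt_not_eq.
    assert (0 < INR (S j')) by (apply lt_0_INR; lia). nra.
    intros p Hp. apply hel_le; lia.
  - replace (Nat.eqb j j') with false by (symmetry; apply Nat.eqb_neq; lia). apply hel_orth_lt; auto.
Qed.

Definition Hc (F : nat -> R) (k j : nat) : R := nsum (fun q => F q * hel j q) k.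

Lemma Hc_indep F j k k' : (S (S j) <= k)%nat -> (S (S j) <= k')%nat -> Hc F k j = Hc F k' j.
Proof. intros. unfold Hc. rewrite !hel_split; auto. Qed.

Lemma helmert_P F m :
  nsum (fun p => F p * F p) (S m) = nsum F (S m) * nsum F (S m) / INR (S m) + nsum (fun j => Hc F (S m) j * Hc F (S m) j) m.
Proof.
  induction m.
  - unfold nsum, lsum; simpl. field.
  - rewrite (nsum_S (fun p => F p * F p)), IHm. rewrite (nsum_S (fun j => Hc F (S (S m)) j * Hc F (S (S m)) j) m).
    assert (Ei : nsum (fun j => Hc F (S (S m)) j * Hc F (S (S m)) j) m = nsum (fun j => Hc F (S m) j * Hc F (S m) j) m).
    { apply nsum_ext. intros p Hp. rewrite (Hc_indep F p (S (S m)) (S m)) by lia. auto. }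
    rewrite Ei.
    assert (Em : Hc F (S (S m)) m = cH m * (nsum F (S m) - INR (S m) * F (S m))) by (unfold Hc; apply hel_split; lia).
    rewrite Em. rewrite (nsum_S F (S m)).
    set (X := nsum (fun j => Hc F (S m) j * Hc F (S m) j) m).
    set (S0 := nsum F (S m)). set (a := F (S m)).
    destruct (cH_prop m) as [Hp E].
    replace (cH m * (S0 - INR (S m) * a) * (cH m * (S0 - INR (S m) * a))) with (cH m * cH m * ((S0 - INR (S m) * a) * (S0 - INR (S m) * a))) by ring.
    rewrite E. rewrite (S_INR (S m)).
    assert (0 < INR (S m)) by (apply lt_0_INR; lia). field. lra.
Qed.

Lemma helmert_R F m p : (p < S m)%nat ->
  F p = nsum F (S m) / INR (S m) + nsum (fun j => Hc F (S m) j * hel j p) m.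
Proof.
  revert p. induction m; intros p Hp.
  - unfold nsum, lsum; simpl. replace p with O by lia. field.
  - rewrite (nsum_S (fun j => Hc F (S (S m)) j * hel j p) m).
    assert (Ei : nsum (fun j => Hc F (S (S m)) j * hel j p) m = nsum (fun j => Hc F (S m) j * hel j p) m).
    { apply nsum_ext. intros q Hq. rewrite (Hc_indep F q (S (S m)) (S m)) by lia. auto. }
    rewrite Ei.
    assert (Em : Hc F (S (S m)) m = cH m * (nsum F (S m) - INR (S m) * F (S m))) by (unfold Hc; apply hel_split; lia).
    rewrite Em. rewrite (nsum_S F (S m)).
    destruct (cH_prop m) as [Hp0 E]. assert (0 < INR (S m)) by (apply lt_0_INR; lia).
    rewrite (S_INR (S m)).
    destruct (Nat.eq_dec p (S m)) as [e|ne].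
    + subst p. rewrite hel_S. rewrite (nsum_ext (fun j => Hc F (S m) j * hel j (S m)) (fun _ => 0)) by (intros q Hq; rewrite hel_gt by lia; ring).
      rewrite nsum_const.
      replace (cH m * (nsum F (S m) - INR (S m) * F (S m)) * (- INR (S m) * cH m)) with (- INR (S m) * (cH m * cH m) * (nsum F (S m) - INR (S m) * F (S m))) by ring.
      rewrite E. field. lra.
    + rewrite (IHm p) at 1 by lia. rewrite hel_le by lia.
      replace (cH m * (nsum F (S m) - INR (S m) * F (S m)) * cH m) with ((cH m * cH m) * (nsum F (S m) - INR (S m) * F (S m))) by ring.
      rewrite E. field. lra.
Qed.

Fixpoint pos {A} (x : A) (l : list A) : nat :=
  match l with [] => O | y :: l' => if cdec x y then O else S (pos x l') end.

Lemma nsum_shift f n : nsum f (S n) = f O + nsum (fun p => f (S p)) n.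
Proof. unfold nsum. simpl seq. rewrite lsum_cons, <- seq_shift, lsum_map. auto. Qed.

Lemma lsum_pos {A} (phi : A -> nat -> R) (l : list A) (d : A) : NoDup l ->
  lsum (fun u => phi u (pos u l)) l = nsum (fun p => phi (nth p l d) p) (length l).
Proof.
  revert phi; induction l as [|a l IH]; intros phi Hn. reflexivity. inversion Hn; subst.
  simpl length. rewrite nsum_shift, lsum_cons. simpl. destruct (cdec a a); [|congruence]. f_equal.
  rewrite (lsum_ext _ (fun u => phi u (S (pos u l)))).
  - apply (IH (fun u p => phi u (S p))); auto.
  - intros u Hu. destruct (cdec u a); [subst; tauto|auto].
Qed.

Lemma pos_nth {A} (l : list A) (d : A) x : In x l -> nth (pos x l) l d = x.
Proof. induction l; simpl. tauto. intros [e|h]; destruct (cdec x a); subst; auto; congruence. Qed.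

Lemma pos_lt {A} (l : list A) x : In x l -> (pos x l < length l)%nat.
Proof. induction l; simpl. tauto. intros [e|h]; destruct (cdec x a); subst; try lia; try congruence. specialize (IHl h). lia. Qed.

Lemma lsum_single {A} (g : A -> R) l a : NoDup l -> In a l -> (forall x, In x l -> x <> a -> g x = 0) -> lsum g l = g a.
Proof.
  intros Hn Ha H. rewrite (lsum_remove g a l) by auto. rewrite lsum_zero. ring.
  intros x Hx. apply in_remove in Hx. apply H; tauto.
Qed.

Definition ex_v {T} (e : excess T) : V T := fst (proj1_sig e).
Definition ex_j {T} (e : excess T) : nat := snd (proj1_sig e).

Lemma ex_eq {T} (e e' : excess T) : ex_v e = ex_v e' -> ex_j e = ex_j e' -> e = e'.
Proof.
  intros H1 H2. apply eq_sig_hprop. intros; apply proof_irrelevance.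
  unfold ex_v, ex_j in *. destruct (proj1_sig e), (proj1_sig e'). simpl in *; subst; auto.
Qed.

Lemma ex_bound {T} (e : excess T) : (S (S (ex_j e)) <= card_Chi T (ex_v e))%nat.
Proof. destruct e as [[v j] [H1 H2]]. unfold ex_v, ex_j; simpl in *. unfold branching in H1. lia. Qed.

Definition mkex (T : rtree) (v : V T) (j : nat) : option (excess T).
Proof.
  destruct (Compare_dec.le_dec 2 (card_Chi T v)) as [h1|h1]; [|exact None].
  destruct (Compare_dec.lt_dec j (card_Chi T v - 1)) as [h2|h2]; [|exact None].
  exact (Some (exist _ (v, j) (conj h1 h2))).
Defined.

Lemma mkex_some T v j : (S (S j) <= card_Chi T v)%nat -> exists e, mkex T v j = Some e /\ ex_v e = v /\ ex_j e = j.
Proof.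
  intros H. unfold mkex. destruct (Compare_dec.le_dec 2 (card_Chi T v)); [|lia]. destruct (Compare_dec.lt_dec j (card_Chi T v - 1)); [|lia].
  eexists; split; [reflexivity|]. unfold ex_v, ex_j; simpl; auto.
Qed.

Lemma mkex_spec T v j e : mkex T v j = Some e -> ex_v e = v /\ ex_j e = j.
Proof.
  unfold mkex. destruct (Compare_dec.le_dec 2 (card_Chi T v)); [|discriminate]. destruct (Compare_dec.lt_dec j (card_Chi T v - 1)); [|discriminate].
  intros H; inversion H; subst. unfold ex_v, ex_j; simpl; auto.
Qed.

Definition otl {A} (o : option A) : list A := match o with Some a => [a] | None => [] end.

Definition exv (T : rtree) (v : V T) : list (excess T) :=
  flat_map (fun j => otl (mkex T v j)) (seq 0 (card_Chi T v - 1)).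

Lemma exv_in T v e : In e (exv T v) <-> ex_v e = v.
Proof.
  unfold exv. rewrite in_flat_map. split.
  - intros [j [_ Hj]]. destruct (mkex T v j) eqn:E; simpl in Hj; [|tauto]. destruct Hj as [Hj|[]]; subst. apply mkex_spec in E. tauto.
  - intros H. exists (ex_j e). pose proof (ex_bound e). rewrite H in H0. split. rewrite in_seq. lia.
    destruct (mkex_some T v (ex_j e)) as [e' [E [E1 E2]]]; auto. rewrite E. simpl. left. apply ex_eq; congruence.
Qed.

Lemma exv_nd T v : NoDup (exv T v).
Proof.
  unfold exv. apply NoDup_flat_map_c. apply seq_NoDup.
  intros j _. destruct (mkex T v j); simpl; repeat constructor; auto.
  intros x y z _ _ Hx Hy. destruct (mkex T v x) eqn:E1; [|destruct Hx]. destruct (mkex T v y) eqn:E2; [|destruct Hy].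
  destruct Hx as [Hx|[]]; destruct Hy as [Hy|[]]; subst. apply mkex_spec in E1, E2. destruct E1, E2. congruence.
Qed.

Lemma exv_sum T (Hlf : locally_finite T) (Hll : leafless T) v (g : excess T -> R) (gg : nat -> R) :
  (forall e, ex_v e = v -> g e = gg (ex_j e)) -> lsum g (exv T v) = nsum gg (card_Chi T v - 1).
Proof.
  intros H. unfold exv. rewrite lsum_flat_map. apply lsum_ext. intros j Hj. apply in_seq in Hj.
  destruct (mkex_some T v j) as [e [E [E1 E2]]]; [lia|]. rewrite E. unfold otl. rewrite lsum_cons, lsum_nil.
  rewrite H; auto. rewrite E2; ring.
Qed.

Definition exL (T : rtree) (N : nat) : list (excess T) := flat_map (exv T) (Lv T N).

Lemma exL_in T (Hlf : locally_finite T) N e : In e (exL T N) <-> depth T (ex_v e) = N.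
Proof.
  unfold exL. rewrite in_flat_map. split.
  - intros [v [Hv He]]. apply exv_in in He. apply Lv_in in Hv; auto. congruence.
  - intros H. exists (ex_v e). split. apply Lv_in; auto. apply exv_in; auto.
Qed.

Lemma exL_nd T (Hlf : locally_finite T) N : NoDup (exL T N).
Proof.
  unfold exL. apply NoDup_flat_map_c. apply Lv_nd; auto. intros; apply exv_nd.
  intros x y z _ _ Hx Hy. apply exv_in in Hx, Hy. congruence.
Qed.

Definition I (T : rtree) : Type := option (excess T).
Definition levI {T} (i : I T) : nat := match i with None => O | Some e => S (depth T (ex_v e)) end.
Definition levJ {T} (j : nat * I T) : nat := (fst j + levI (snd j))%nat.

Definition wv (T : rtree) (i : I T) (x : V T) : R :=
  match i with
  | None => if cdec x (root T) then 1 else 0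
  | Some e => match par T x with
              | Some v => if cdec v (ex_v e) then hel (ex_j e) (pos x (ch T (ex_v e))) else 0
              | None => 0 end
  end.

Definition bv (T : rtree) (j : nat * I T) : V T -> R := Nat.iter (fst j) (shR T) (wv T (snd j)).

Lemma bv_S T n i : bv T (S n, i) = shR T (bv T (n, i)). Proof. reflexivity. Qed.
Lemma bv_0 T i : bv T (O, i) = wv T i. Proof. reflexivity. Qed.

Lemma bv_supp T (Hlf : locally_finite T) j x : depth T x <> levJ j -> bv T j x = 0.
Proof.
  destruct j as [n i]. unfold levJ; simpl. revert x. induction n; intros x Hx.
  - rewrite bv_0. unfold wv. destruct i as [e|]; simpl in *.
    + destruct (par T x) eqn:E; auto. destruct (cdec v (ex_v e)); auto. subst. apply depth_child in E. lia.
    + destruct (cdec x (root T)); auto. subst. rewrite depth_root in Hx. lia.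
  - rewrite bv_S. unfold shR. destruct (par T x) eqn:E; auto. rewrite IHn. lra. apply depth_child in E. lia.
Qed.

Definition cf (T : rtree) (f : V T -> R) (j : nat * I T) : R := lsum (fun x => f x * bv T j x) (Lv T (levJ j)).

Definition adj (T : rtree) (f : V T -> R) (v : V T) : R := lsum f (ch T v) / sqrt (INR (card_Chi T v)).

Lemma shR_adj T (Hlf : locally_finite T) f h N :
  lsum (fun x => f x * shR T h x) (Lv T (S N)) = lsum (fun v => adj T f v * h v) (Lv T N).
Proof.
  rewrite lsum_Lv_S. apply lsum_ext. intros v _. unfold adj.
  rewrite (lsum_ext _ (fun u => f u * (h v / sqrt (INR (card_Chi T v))))).
  rewrite lsum_scalr. unfold Rdiv. ring.
  intros u Hu. apply (ch_in T Hlf) in Hu. unfold shR. rewrite Hu. auto.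
Qed.

Lemma cf_S T (Hlf : locally_finite T) f n i : cf T f (S n, i) = cf T (adj T f) (n, i).
Proof. unfold cf, levJ. simpl. rewrite bv_S. apply shR_adj; auto. Qed.

Definition Fv (T : rtree) (f : V T -> R) (v : V T) (p : nat) : R := f (nth p (ch T v) (root T)).

Lemma lsum_ch_pos T (Hlf : locally_finite T) v (phi : V T -> nat -> R) :
  lsum (fun u => phi u (pos u (ch T v))) (ch T v) = nsum (fun p => phi (nth p (ch T v) (root T)) p) (card_Chi T v).
Proof. rewrite card_ch. apply lsum_pos. apply ch_nd; auto. Qed.

Lemma wv_e_ch T e v u : par T u = Some v -> wv T (Some e) u = if cdec v (ex_v e) then hel (ex_j e) (pos u (ch T (ex_v e))) else 0.
Proof. intros H. simpl. rewrite H. auto. Qed.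

Lemma cf_0e T (Hlf : locally_finite T) f e :
  cf T f (O, Some e) = Hc (Fv T f (ex_v e)) (card_Chi T (ex_v e)) (ex_j e).
Proof.
  unfold cf. replace (levJ (O, Some e)) with (S (depth T (ex_v e))) by reflexivity. rewrite lsum_Lv_S.
  rewrite (lsum_single _ _ (ex_v e)).
  - rewrite (lsum_ext _ (fun u => f u * hel (ex_j e) (pos u (ch T (ex_v e))))).
    + rewrite (lsum_ch_pos T Hlf (ex_v e) (fun u p => f u * hel (ex_j e) p)). unfold Hc, Fv. auto.
    + intros u Hu. apply (ch_in T Hlf) in Hu. rewrite bv_0, (wv_e_ch T e _ u Hu). destruct (cdec (ex_v e) (ex_v e)); [auto|congruence].
  - apply Lv_nd; auto.
  - apply Lv_in; auto.
  - intros x Hx Hne. apply lsum_zero. intros u Hu. apply (ch_in T Hlf) in Hu. rewrite bv_0, (wv_e_ch T e _ u Hu).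
    destruct (cdec x (ex_v e)); [congruence|ring].
Qed.

Definition jS {T} (p : nat * I T) : nat * I T := (S (fst p), snd p).

Fixpoint JL (T : rtree) (N : nat) : list (nat * I T) :=
  match N with
  | O => [(O, None)]
  | S N' => map jS (JL T N') ++ map (fun e => (O, Some e)) (exL T N')
  end.

Lemma JL_in T (Hlf : locally_finite T) N j : In j (JL T N) <-> levJ j = N.
Proof.
  revert j; induction N; intros [n i]; unfold levJ; simpl.
  - split. intros [e|[]]. inversion e; subst; auto.
    intros H. left. destruct n; [|lia]. destruct i; simpl in H; [lia|auto].
  - rewrite in_app_iff, !in_map_iff. split.
    + intros [[[n' i'] [e Ha]]|[e' [e He]]].
      * unfold jS in e; simpl in e. inversion e; subst. apply IHN in Ha. unfold levJ in Ha; simpl in Ha. lia.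
      * inversion e; subst. simpl. apply exL_in in He; auto; lia.
    + intros H. destruct n as [|n].
      * right. destruct i as [e|]; simpl in H; [|lia]. exists e. split; auto. apply exL_in; auto; lia.
      * left. exists (n, i). split; auto. apply IHN. unfold levJ; simpl; lia.
Qed.

Lemma JL_nd T (Hlf : locally_finite T) N : NoDup (JL T N).
Proof.
  induction N; simpl. repeat constructor; auto.
  apply NoDup_app_c.
  - apply NoDup_map_inj; auto. intros [a b] [c d] e. unfold jS in e; simpl in e. inversion e; auto.
  - apply NoDup_map_inj. intros a b e; inversion e; auto. apply exL_nd; auto.
  - intros x Hx Hy. rewrite in_map_iff in Hx, Hy. destruct Hx as [a [e1 _]]. destruct Hy as [b [e2 _]]. subst. unfold jS in e2. discriminate.
Qed.

Definition d01 {A} (x y : A) : R := if cdec x y then 1 else 0.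

Lemma d01_iff {A B} (x y : A) (x' y' : B) : (x = y <-> x' = y') -> d01 x y = d01 x' y'.
Proof. intros H. unfold d01. destruct (cdec x y), (cdec x' y'); tauto. Qed.

Lemma d01_refl {A} (x : A) : d01 x x = 1.
Proof. unfold d01. destruct (cdec x x); congruence. Qed.

Lemma eqb_d01 (a b : nat) : (if Nat.eqb a b then 1 else 0) = d01 a b.
Proof. unfold d01. destruct (Nat.eqb_spec a b), (cdec a b); tauto. Qed.

Lemma d01_ne {A} (x y : A) : x <> y -> d01 x y = 0.
Proof. intros H. unfold d01. destruct (cdec x y); tauto. Qed.

Lemma adj_w0 T (Hlf : locally_finite T) i v : adj T (wv T i) v = 0.
Proof.
  unfold adj. rewrite (lsum_ext _ (fun u => wv T i u)) by auto. destruct i as [e|].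
  - destruct (cdec v (ex_v e)) as [E|E].
    + subst. rewrite (lsum_ext _ (fun u => hel (ex_j e) (pos u (ch T (ex_v e))))).
      rewrite (lsum_ch_pos T Hlf (ex_v e) (fun u p => hel (ex_j e) p)). rewrite hel_sum0. unfold Rdiv; ring.
      apply ex_bound.
      intros u Hu. apply (ch_in T Hlf) in Hu. rewrite wv_e_ch with (v := ex_v e); auto. destruct (cdec (ex_v e) (ex_v e)); congruence.
    + rewrite lsum_zero. unfold Rdiv; ring. intros u Hu. apply (ch_in T Hlf) in Hu. rewrite wv_e_ch with (v := v); auto.
      destruct (cdec v (ex_v e)); congruence.
  - rewrite lsum_zero. unfold Rdiv; ring. intros u Hu. apply (ch_in T Hlf) in Hu. simpl. destruct (cdec u (root T)); auto.
    subst. rewrite par_root in Hu. discriminate.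
Qed.

Lemma inner_shR_w T (Hlf : locally_finite T) h i N :
  lsum (fun x => wv T i x * shR T h x) (Lv T (S N)) = 0.
Proof.
  rewrite shR_adj by auto. apply lsum_zero. intros v _. rewrite adj_w0; auto. ring.
Qed.

Lemma ON T (Hlf : locally_finite T) (Hll : leafless T) N : forall j j', In j (JL T N) -> In j' (JL T N) ->
  lsum (fun x => bv T j x * bv T j' x) (Lv T N) = d01 j j'.
Proof.
  induction N; intros j j' Hj Hj'.
  - simpl in Hj, Hj'. destruct Hj as [Hj|[]]; destruct Hj' as [Hj'|[]]; subst.
    simpl Lv. rewrite lsum_cons, lsum_nil. rewrite bv_0. unfold wv. destruct (cdec (root T) (root T)); [|congruence].
    rewrite d01_refl. ring.
  - simpl JL in Hj, Hj'. rewrite in_app_iff, !in_map_iff in Hj, Hj'.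
    destruct Hj as [[a [Ea Ha]]|[e [Ee He]]]; destruct Hj' as [[a' [Ea' Ha']]|[e' [Ee' He']]]; subst.
    + destruct a as [n i], a' as [n' i']. unfold jS; cbn [fst snd]. rewrite !bv_S. rewrite shR_inner by auto. rewrite IHN by auto.
      apply d01_iff. split; intros E; inversion E; auto.
    + destruct a as [n i]. unfold jS; cbn [fst snd]. rewrite bv_S, bv_0.
      rewrite (lsum_ext _ (fun x => wv T (Some e') x * shR T (bv T (n, i)) x)) by (intros; ring).
      rewrite inner_shR_w by auto. symmetry. apply d01_ne. discriminate.
    + destruct a' as [n i]. unfold jS; cbn [fst snd]. rewrite bv_S, bv_0.
      rewrite inner_shR_w by auto. symmetry. apply d01_ne. discriminate.
    + rewrite !bv_0. rewrite lsum_Lv_S.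
      apply exL_in in He, He'; auto.
      rewrite (lsum_single _ _ (ex_v e)).
      * destruct (cdec (ex_v e') (ex_v e)) as [E|E].
        -- rewrite (lsum_ext _ (fun u => hel (ex_j e) (pos u (ch T (ex_v e))) * hel (ex_j e') (pos u (ch T (ex_v e))))).
           ++ rewrite (lsum_ch_pos T Hlf (ex_v e) (fun u p => hel (ex_j e) p * hel (ex_j e') p)).
              rewrite hel_orth. 2: apply ex_bound. 2: rewrite <- E; apply ex_bound.
              rewrite eqb_d01. apply d01_iff. split; intros r.
              ** f_equal. f_equal. apply ex_eq; auto.
              ** inversion r; auto.
           ++ intros u Hu. apply (ch_in T Hlf) in Hu. rewrite !wv_e_ch with (v := ex_v e) by auto.
              destruct (cdec (ex_v e) (ex_v e)); [|congruence]. destruct (cdec (ex_v e) (ex_v e')); [|congruence]. rewrite E. auto.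
        -- rewrite lsum_zero. symmetry. apply d01_ne. intros r; inversion r; subst; auto.
           intros u Hu. apply (ch_in T Hlf) in Hu. rewrite (wv_e_ch T e') with (v := ex_v e) by auto.
           destruct (cdec (ex_v e) (ex_v e')); [congruence|ring].
      * apply Lv_nd; auto.
      * apply Lv_in; auto.
      * intros v Hv Hne. apply lsum_zero. intros u Hu. apply (ch_in T Hlf) in Hu. rewrite (wv_e_ch T e) with (v := v) by auto.
        destruct (cdec v (ex_v e)); [congruence|ring].
Qed.

Lemma vertex_P T (Hlf : locally_finite T) (Hll : leafless T) f v :
  lsum (fun u => f u * f u) (ch T v) = adj T f v * adj T f v +
    nsum (fun j => Hc (Fv T f v) (card_Chi T v) j * Hc (Fv T f v) (card_Chi T v) j) (card_Chi T v - 1).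
Proof.
  rewrite (lsum_ch_pos T Hlf v (fun u _ => f u * f u)). unfold adj.
  assert (E1 : lsum f (ch T v) = nsum (Fv T f v) (card_Chi T v)) by exact (lsum_ch_pos T Hlf v (fun u _ => f u)).
  rewrite E1.
  destruct (sqrt_k_sq T Hlf Hll v) as [Hs Hp].
  pose proof (card_pos T Hlf Hll v).
  remember (card_Chi T v) as k eqn:Ek. destruct k as [|m]; [lia|].
  replace (S m - 1)%nat with m by lia.
  pose proof (helmert_P (Fv T f v) m) as HP. transitivity (nsum (fun p => Fv T f v p * Fv T f v p) (S m)). reflexivity. rewrite HP.
  f_equal. set (s := sqrt (INR (S m))) in *. rewrite <- Hs. field. lra.
Qed.

Lemma vertex_R T (Hlf : locally_finite T) (Hll : leafless T) f v u : In u (ch T v) ->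
  f u = adj T f v / sqrt (INR (card_Chi T v)) +
    nsum (fun j => Hc (Fv T f v) (card_Chi T v) j * hel j (pos u (ch T v))) (card_Chi T v - 1).
Proof.
  intros Hu. unfold adj.
  assert (E1 : lsum f (ch T v) = nsum (Fv T f v) (card_Chi T v)) by exact (lsum_ch_pos T Hlf v (fun u _ => f u)).
  rewrite E1.
  assert (Hpl : (pos u (ch T v) < card_Chi T v)%nat) by (rewrite card_ch; apply pos_lt; auto).
  assert (Fu : f u = Fv T f v (pos u (ch T v))) by (unfold Fv; rewrite pos_nth; auto).
  destruct (sqrt_k_sq T Hlf Hll v) as [Hs Hp].
  pose proof (card_pos T Hlf Hll v).
  remember (card_Chi T v) as k eqn:Ek. destruct k as [|m]; [lia|].
  replace (S m - 1)%nat with m by lia.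
  rewrite Fu. rewrite (helmert_R (Fv T f v) m (pos u (ch T v))) at 1 by auto.
  f_equal. set (s := sqrt (INR (S m))) in *. rewrite <- Hs. field. lra.
Qed.

Lemma PR T (Hlf : locally_finite T) (Hll : leafless T) N : forall f,
  lsum (fun x => f x * f x) (Lv T N) = lsum (fun j => cf T f j * cf T f j) (JL T N) /\
  (forall x, In x (Lv T N) -> f x = lsum (fun j => cf T f j * bv T j x) (JL T N)).
Proof.
  induction N; intros f.
  - assert (C0 : cf T f (O, None) = f (root T)).
    { unfold cf. simpl Lv. rewrite lsum_cons, lsum_nil, bv_0. unfold wv. destruct (cdec (root T) (root T)); [|congruence]. ring. }
    simpl Lv. simpl JL. split.
    + rewrite !lsum_cons, !lsum_nil, C0. ring.
    + intros x [ex|[]]; subst. rewrite lsum_cons, lsum_nil, C0, bv_0. unfold wv. destruct (cdec (root T) (root T)); [|congruence]. ring.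
  - simpl JL. split.
    + rewrite lsum_Lv_S. rewrite (lsum_ext _ (fun v => adj T f v * adj T f v +
         nsum (fun j => Hc (Fv T f v) (card_Chi T v) j * Hc (Fv T f v) (card_Chi T v) j) (card_Chi T v - 1))).
      2:{ intros v _. apply vertex_P; auto. }
      rewrite lsum_plus, lsum_app, !lsum_map.
      rewrite (lsum_ext (fun x => cf T f (jS x) * cf T f (jS x)) (fun x => cf T (adj T f) x * cf T (adj T f) x)).
      2:{ intros [n i] _. unfold jS; cbn [fst snd]. rewrite cf_S; auto. }
      rewrite <- (proj1 (IHN (adj T f))). f_equal.
      unfold exL. rewrite lsum_flat_map. apply lsum_ext. intros v _.
      symmetry. apply exv_sum; auto. intros e Ee. rewrite cf_0e; auto. rewrite Ee. auto.
    + intros x Hx. simpl Lv in Hx. apply in_flat_map in Hx. destruct Hx as [v [Hv Hx]].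
      pose proof Hx as Hp. apply (ch_in T Hlf) in Hp.
      rewrite lsum_app, !lsum_map.
      rewrite (lsum_ext (fun a => cf T f (jS a) * bv T (jS a) x) (fun a => cf T (adj T f) a * bv T a v * / sqrt (INR (card_Chi T v)))).
      2:{ intros [n i] _. unfold jS; cbn [fst snd]. rewrite cf_S, bv_S by auto. unfold shR. rewrite Hp. unfold Rdiv. ring. }
      rewrite lsum_scalr. rewrite <- (proj2 (IHN (adj T f)) v Hv).
      unfold exL. rewrite lsum_flat_map. rewrite (lsum_single _ _ v).
      * rewrite (exv_sum T Hlf Hll v _ (fun j => Hc (Fv T f v) (card_Chi T v) j * hel j (pos x (ch T v)))).
        -- apply vertex_R; auto.
        -- intros e Ee. rewrite cf_0e by auto. rewrite bv_0. rewrite (wv_e_ch T e v x Hp). rewrite Ee.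
           destruct (cdec v v); [|congruence]. auto.
      * apply Lv_nd; auto.
      * auto.
      * intros v' Hv' Hne. apply lsum_zero. intros e He. apply exv_in in He. rewrite bv_0, (wv_e_ch T e v x Hp).
        destruct (cdec v (ex_v e)); [congruence|ring].
Qed.

Definition JU (T : rtree) (N : nat) : list (nat * I T) := flat_map (JL T) (seq 0 (S N)).

Lemma JU_exh T (Hlf : locally_finite T) : exh (JU T).
Proof.
  constructor.
  - intros N. apply NoDup_flat_map_c. apply seq_NoDup. intros; apply JL_nd; auto.
    intros x y z _ _ Hx Hy. apply JL_in in Hx, Hy; auto. congruence.
  - intros N x. unfold JU. rewrite !in_flat_map. intros [n [Hn Hx]]. exists n. split; auto. rewrite in_seq in *. lia.
  - intros x. exists (levJ x). unfold JU. rewrite in_flat_map. exists (levJ x). split. rewrite in_seq; lia. apply JL_in; auto.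
Qed.

Lemma parseval_LU T (Hlf : locally_finite T) (Hll : leafless T) f N :
  lsum (fun x => f x * f x) (LU T N) = lsum (fun j => cf T f j * cf T f j) (JU T N).
Proof.
  rewrite lsum_LU. unfold JU. rewrite lsum_flat_map. apply lsum_ext. intros n _. apply PR; auto.
Qed.

Definition Re_ {T} (f : V T -> C) : V T -> R := fun x => fst (f x).
Definition Im_ {T} (f : V T -> C) : V T -> R := fun x => snd (f x).

Definition gC (T : rtree) (f : V T -> C) (j : nat * I T) : R :=
  cf T (Re_ f) j * cf T (Re_ f) j + cf T (Im_ f) j * cf T (Im_ f) j.

Lemma gC_nonneg T f j : 0 <= gC T f j.
Proof. unfold gC. nra. Qed.

Lemma Cnorm2_nonneg (z : C) : 0 <= Cnorm2 z.
Proof. unfold Cnorm2. nra. Qed.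

Lemma parseval_C T (Hlf : locally_finite T) (Hll : leafless T) (f : V T -> C) N :
  lsum (fun x => Cnorm2 (f x)) (LU T N) = lsum (gC T f) (JU T N).
Proof.
  unfold Cnorm2, gC. rewrite !lsum_plus. rewrite <- !parseval_LU by auto. auto.
Qed.

Lemma l2_LU T (Hlf : locally_finite T) (f : V T -> C) l :
  l2norm2 T f l <-> Un_cv (fun N => lsum (fun x => Cnorm2 (f x)) (LU T N)) l.
Proof.
  unfold l2norm2. apply (infinite_sum_exh (enum T) (fun x => Cnorm2 (f x))).
  apply enum_inj. apply enum_surj. apply LU_exh; auto. intros; apply Cnorm2_nonneg.
Qed.

Lemma l2_JU T (Hlf : locally_finite T) (Hll : leafless T) (f : V T -> C) l :
  l2norm2 T f l <-> Un_cv (fun N => lsum (gC T f) (JU T N)) l.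
Proof.
  rewrite l2_LU by auto. split; intros H e He; destruct (H e He) as [M HM]; exists M; intros n Hn;
  [rewrite <- parseval_C | rewrite parseval_C]; auto.
Qed.

Definition tau {T1 T2 : rtree} (rho : I T2 -> I T1) (j : nat * I T2) : nat * I T1 := (fst j, rho (snd j)).

Definition Ur (T1 T2 : rtree) (rho : I T2 -> I T1) (f : V T1 -> R) (y : V T2) : R :=
  lsum (fun j2 => cf T1 f (tau rho j2) * bv T2 j2 y) (JL T2 (depth T2 y)).

Lemma cf_Ur T1 T2 (Hlf2 : locally_finite T2) (Hll2 : leafless T2) rho f j2 :
  cf T2 (Ur T1 T2 rho f) j2 = cf T1 f (tau rho j2).
Proof.
  unfold cf at 1. set (N := levJ j2).
  rewrite (lsum_ext _ (fun y => lsum (fun j' => cf T1 f (tau rho j') * (bv T2 j' y * bv T2 j2 y)) (JL T2 N))).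
  2:{ intros y Hy. apply Lv_in in Hy; auto. unfold Ur. rewrite Hy. rewrite <- lsum_scalr. apply lsum_ext. intros; ring. }
  rewrite lsum_swap. rewrite (lsum_ext _ (fun j' => cf T1 f (tau rho j') * d01 j' j2)).
  2:{ intros j' Hj'. rewrite lsum_scal. rewrite ON; auto. apply JL_in; auto. }
  rewrite (lsum_single _ _ j2). rewrite d01_refl. ring.
  apply JL_nd; auto. apply JL_in; auto.
  intros x _ Hne. rewrite d01_ne; auto. ring.
Qed.

Lemma cf_lin T (a b : R) f g h j : cf T (fun x => a * f x + b * g x + h x) j = a * cf T f j + b * cf T g j + cf T h j.
Proof. unfold cf. rewrite <- !lsum_scal, <- !lsum_plus. apply lsum_ext. intros; ring. Qed.

Lemma Ur_lin T1 T2 rho (a b : R) f g h y :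
  Ur T1 T2 rho (fun x => a * f x + b * g x + h x) y = a * Ur T1 T2 rho f y + b * Ur T1 T2 rho g y + Ur T1 T2 rho h y.
Proof. unfold Ur. rewrite <- !lsum_scal, <- !lsum_plus. apply lsum_ext. intros j _. rewrite cf_lin. ring. Qed.

Definition UC (T1 T2 : rtree) (rho : I T2 -> I T1) (f : V T1 -> C) (y : V T2) : C :=
  (Ur T1 T2 rho (Re_ f) y, Ur T1 T2 rho (Im_ f) y).

Lemma gC_UC T1 T2 (Hlf2 : locally_finite T2) (Hll2 : leafless T2) rho f j2 :
  gC T2 (UC T1 T2 rho f) j2 = gC T1 f (tau rho j2).
Proof.
  unfold gC. assert (E1 : Re_ (UC T1 T2 rho f) = Ur T1 T2 rho (Re_ f)) by reflexivity.
  assert (E2 : Im_ (UC T1 T2 rho f) = Ur T1 T2 rho (Im_ f)) by reflexivity.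
  rewrite E1, E2, !cf_Ur; auto.
Qed.

Lemma UC_norm T1 T2 (Hlf1 : locally_finite T1) (Hll1 : leafless T1) (Hlf2 : locally_finite T2) (Hll2 : leafless T2)
  rho rho' (H1 : forall i, rho' (rho i) = i) (H2 : forall i, rho (rho' i) = i) f l :
  l2norm2 T1 f l -> l2norm2 T2 (UC T1 T2 rho f) l.
Proof.
  intros Hf. apply l2_JU in Hf; auto. apply l2_JU; auto.
  assert (Hx : exh (fun N => map (tau rho) (JU T2 N))).
  { apply (exh_map _ _ (tau rho')). intros [n i]; unfold tau; simpl; rewrite H1; auto.
    intros [n i]; unfold tau; simpl; rewrite H2; auto. apply JU_exh; auto. }
  pose proof (exh_cv _ _ (gC T1 f) l (JU_exh T1 Hlf1) Hx (gC_nonneg T1 f) Hf) as Hc.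
  intros e He. destruct (Hc e He) as [M HM]. exists M. intros n Hn.
  rewrite (lsum_ext _ (fun j => gC T1 f (tau rho j))). rewrite <- lsum_map. apply HM; auto.
  intros; apply gC_UC; auto.
Qed.

Lemma UC_UC T1 T2 (Hlf1 : locally_finite T1) (Hll1 : leafless T1) (Hlf2 : locally_finite T2) (Hll2 : leafless T2)
  rho rho' (H1 : forall i, rho' (rho i) = i) g y :
  UC T1 T2 rho (UC T2 T1 rho' g) y = g y.
Proof.
  assert (K : forall h : V T2 -> R, Ur T1 T2 rho (Ur T2 T1 rho' h) y = h y).
  { intros h. unfold Ur at 1. rewrite (lsum_ext _ (fun j2 => cf T2 h j2 * bv T2 j2 y)).
    - symmetry. apply PR; auto. apply Lv_in; auto.
    - intros [n i] _. rewrite cf_Ur by auto. unfold tau; simpl. rewrite H1. auto. }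
  unfold UC at 1. unfold Re_ at 1, Im_ at 1. unfold UC. simpl.
  change (fun x => Ur T2 T1 rho' (Re_ g) x) with (Ur T2 T1 rho' (Re_ g)).
  change (fun x => Ur T2 T1 rho' (Im_ g) x) with (Ur T2 T1 rho' (Im_ g)).
  rewrite !K. unfold Re_, Im_. destruct (g y); auto.
Qed.

Lemma adj_shR T (Hlf : locally_finite T) (Hll : leafless T) f v : adj T (shR T f) v = f v.
Proof.
  unfold adj. rewrite (lsum_ext _ (fun _ => f v / sqrt (INR (card_Chi T v)))).
  rewrite lsum_ch_const by auto. destruct (sqrt_k_sq T Hlf Hll v) as [Hs Hp].
  set (s := sqrt (INR (card_Chi T v))) in *. rewrite <- Hs. field. lra.
  intros u Hu. apply (ch_in T Hlf) in Hu. unfold shR. rewrite Hu. auto.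
Qed.

Lemma cf_shR_0 T (Hlf : locally_finite T) f i : cf T (shR T f) (O, i) = 0.
Proof.
  destruct i as [e|].
  - unfold cf. replace (levJ (O, Some e)) with (S (depth T (ex_v e))) by reflexivity.
    rewrite (lsum_ext _ (fun x => wv T (Some e) x * shR T f x)) by (intros; rewrite bv_0; ring).
    apply inner_shR_w; auto.
  - unfold cf. simpl Lv. rewrite lsum_cons, lsum_nil. unfold shR. rewrite par_root. ring.
Qed.

Lemma Ur_shift T1 T2 (Hlf1 : locally_finite T1) (Hll1 : leafless T1) (Hlf2 : locally_finite T2) (Hll2 : leafless T2)
  rho f y : Ur T1 T2 rho (shR T1 f) y = shR T2 (Ur T1 T2 rho f) y.
Proof.
  unfold Ur at 1. destruct (depth T2 y) as [|N] eqn:Ed.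
  - simpl JL. rewrite lsum_cons, lsum_nil. unfold tau; simpl. rewrite cf_shR_0 by auto.
    unfold shR. destruct (par T2 y) eqn:E; [|ring]. apply depth_child in E. lia.
  - destruct (depth_pos_par T2 y) as [v Hv]; [lia|]. pose proof Hv as Hd. apply depth_child in Hd.
    assert (Hdv : depth T2 v = N) by lia.
    simpl JL. rewrite lsum_app, !lsum_map.
    rewrite (lsum_zero (fun e => cf T1 (shR T1 f) (tau rho (O, Some e)) * bv T2 (O, Some e) y)).
    2:{ intros e _. unfold tau; simpl. rewrite cf_shR_0 by auto. ring. }
    unfold shR at 2. rewrite Hv. unfold Ur. rewrite Hdv. rewrite Rplus_0_r. unfold Rdiv. rewrite <- lsum_scalr.
    apply lsum_ext. intros [n i] _. unfold tau, jS; simpl.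
    replace (S n, rho i) with (@jS T1 (n, rho i)) by reflexivity. unfold jS; simpl. rewrite cf_S by auto. replace (adj T1 (shR T1 f)) with f by (extensionality z; rewrite adj_shR; auto).
    rewrite bv_S. unfold shR. rewrite Hv. unfold Rdiv. ring.
Qed.

Lemma dweight1 T (Hlf : locally_finite T) (Hll : leafless T) v : dweight T 1 v = / sqrt (INR (card_Chi T v)).
Proof.
  unfold dweight. replace ((INR (depth T v) + 1) / (INR (depth T v) + 1)) with 1.
  rewrite sqrt_1. ring. field. pose proof (pos_INR (depth T v)). lra.
Qed.

Lemma ds_Re T (Hlf : locally_finite T) (Hll : leafless T) f : Re_ (dirichlet_shift T 1 f) = shR T (Re_ f).
Proof.
  extensionality u. unfold Re_, dirichlet_shift, shR. destruct (par T u); simpl; auto.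
  rewrite dweight1 by auto. unfold Rdiv. ring.
Qed.

Lemma ds_Im T (Hlf : locally_finite T) (Hll : leafless T) f : Im_ (dirichlet_shift T 1 f) = shR T (Im_ f).
Proof.
  extensionality u. unfold Im_, dirichlet_shift, shR. destruct (par T u); simpl; auto.
  rewrite dweight1 by auto. unfold Rdiv. ring.
Qed.

Theorem backward T1 T2 : locally_finite T1 -> leafless T1 -> locally_finite T2 -> leafless T2 ->
  same_card (excess T1) (excess T2) ->
  unitarily_equivalent T1 T2 (dirichlet_shift T1 1) (dirichlet_shift T2 1).
Proof.
  intros Hlf1 Hll1 Hlf2 Hll2 [p [q [Hqp Hpq]]].
  set (rho := fun i : I T2 => option_map q i).
  set (rho' := fun i : I T1 => option_map p i).
  assert (R1 : forall i, rho' (rho i) = i) by (intros [e|]; unfold rho, rho'; simpl; try rewrite Hpq; auto).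
  assert (R2 : forall i, rho (rho' i) = i) by (intros [e|]; unfold rho, rho'; simpl; try rewrite Hqp; auto).
  exists (UC T1 T2 rho). split; [|split; [|split; [|split]]].
  - intros f [l Hl]. exists l. apply (UC_norm T1 T2 Hlf1 Hll1 Hlf2 Hll2 rho rho'); auto.
  - intros a f g _ _ u. unfold UC. unfold Cadd, Cmul. simpl.
    assert (E1 : Re_ (fun x => (fst a * fst (f x) - snd a * snd (f x) + fst (g x), fst a * snd (f x) + snd a * fst (f x) + snd (g x)))
                = (fun x => fst a * Re_ f x + (- snd a) * Im_ f x + Re_ g x)).
    { extensionality x. unfold Re_, Im_. simpl. ring. }
    assert (E2 : Im_ (fun x => (fst a * fst (f x) - snd a * snd (f x) + fst (g x), fst a * snd (f x) + snd a * fst (f x) + snd (g x)))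
                = (fun x => fst a * Im_ f x + snd a * Re_ f x + Im_ g x)).
    { extensionality x. unfold Re_, Im_. simpl. ring. }
    rewrite E1, E2, !Ur_lin. f_equal; ring.
  - intros f l _ Hl. apply (UC_norm T1 T2 Hlf1 Hll1 Hlf2 Hll2 rho rho'); auto.
  - intros g [l Hl]. exists (UC T2 T1 rho' g). split.
    + exists l. apply (UC_norm T2 T1 Hlf2 Hll2 Hlf1 Hll1 rho' rho); auto.
    + intros u. apply UC_UC; auto.
  - intros f _ u. unfold UC. rewrite ds_Re, ds_Im by auto. rewrite !Ur_shift by auto.
    unfold dirichlet_shift, shR. destruct (par T2 u) eqn:E. 2: auto.
    rewrite dweight1 by auto. unfold Cmul, RtoC. simpl. f_equal; unfold Re_, Im_; simpl; unfold Rdiv; ring.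
Qed.

Lemma cv_event (u v : nat -> R) l : Un_cv u l -> (exists N0, forall N, (N >= N0)%nat -> v N = u N) -> Un_cv v l.
Proof.
  intros H [N0 HN] e He. destruct (H e He) as [M HM]. exists (max M N0). intros n Hn.
  rewrite HN by lia. apply HM. lia.
Qed.

Lemma cv_const (c : R) : Un_cv (fun _ => c) c.
Proof. intros e He. exists O. intros. unfold Rdist. rewrite Rminus_diag, Rabs_R0. auto. Qed.

Definition cpx {T} (h : V T -> R) : V T -> C := fun x => (h x, 0).

Definition ortho (T : rtree) (f h : V T -> C) : Prop :=
  forall a l1 l2 l3, l2norm2 T f l1 -> l2norm2 T h l2 ->
    l2norm2 T (fun x => Cadd (Cmul a (h x)) (f x)) l3 -> l3 = l1 + Cnorm2 a * l2.

Lemma Cnorm2_comb (a h f : C) : Cnorm2 (Cadd (Cmul a h) f) =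
  Cnorm2 f + Cnorm2 a * Cnorm2 h + 2 * fst a * (fst f * fst h + snd f * snd h) + 2 * snd a * (snd f * fst h - fst f * snd h).
Proof. destruct a, h, f. unfold Cnorm2, Cadd, Cmul. simpl. ring. Qed.

Definition crR {T} (f h : V T -> C) (x : V T) : R := fst (f x) * fst (h x) + snd (f x) * snd (h x).
Definition crI {T} (f h : V T -> C) (x : V T) : R := snd (f x) * fst (h x) - fst (f x) * snd (h x).

Lemma norm_comb T (Hlf : locally_finite T) f h a l1 l2 c1 c2 : l2norm2 T f l1 -> l2norm2 T h l2 ->
  (exists N0, forall N, (N >= N0)%nat -> lsum (crR f h) (LU T N) = c1 /\ lsum (crI f h) (LU T N) = c2) ->
  l2norm2 T (fun x => Cadd (Cmul a (h x)) (f x)) (l1 + Cnorm2 a * l2 + 2 * fst a * c1 + 2 * snd a * c2).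
Proof.
  intros Hf Hh [N0 HN]. apply l2_LU in Hf, Hh; auto. apply l2_LU; auto.
  apply (cv_event (fun N => lsum (fun x => Cnorm2 (f x)) (LU T N) + Cnorm2 a * lsum (fun x => Cnorm2 (h x)) (LU T N) + 2 * fst a * c1 + 2 * snd a * c2)).
  - apply CV_plus; [apply CV_plus; [apply CV_plus|]|]; auto; try apply cv_const.
    apply CV_mult; auto. apply cv_const.
  - exists N0. intros N HN0. destruct (HN N HN0) as [E1 E2]. rewrite <- E1, <- E2.
    rewrite (lsum_ext _ (fun x => Cnorm2 (f x) + Cnorm2 a * Cnorm2 (h x) + 2 * fst a * crR f h x + 2 * snd a * crI f h x)).
    + rewrite !lsum_plus, !lsum_scal. ring.
    + intros x _. rewrite Cnorm2_comb. unfold crR, crI. ring.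
Qed.

Lemma ortho_cross T (Hlf : locally_finite T) f h :
  (forall N, lsum (crR f h) (LU T N) = 0 /\ lsum (crI f h) (LU T N) = 0) -> ortho T f h.
Proof.
  intros H a l1 l2 l3 H1 H2 H3.
  pose proof (norm_comb T Hlf f h a l1 l2 0 0 H1 H2) as K. assert (K' : l2norm2 T (fun x => Cadd (Cmul a (h x)) (f x)) (l1 + Cnorm2 a * l2 + 2 * fst a * 0 + 2 * snd a * 0)).
  { apply K. exists O. intros; apply H. }
  unfold l2norm2 in *. rewrite (uniqueness_sum _ _ _ H3 K'). ring.
Qed.

Lemma LU_level T (Hlf : locally_finite T) (g : V T -> R) L N : (forall x, depth T x <> L -> g x = 0) -> (L <= N)%nat ->
  lsum g (LU T N) = lsum g (Lv T L).
Proof.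
  intros Hg HL. rewrite lsum_LU. rewrite (lsum_single _ _ L). auto. apply seq_NoDup. apply in_seq; lia.
  intros n _ Hn. apply lsum_zero. intros x Hx. apply Lv_in in Hx; auto. apply Hg. lia.
Qed.

Lemma level_l2 T (Hlf : locally_finite T) (h : V T -> R) L : (forall x, depth T x <> L -> h x = 0) ->
  l2norm2 T (cpx h) (lsum (fun x => h x * h x) (Lv T L)).
Proof.
  intros Hh. apply l2_LU; auto. apply (cv_event (fun _ => lsum (fun x => h x * h x) (Lv T L))). apply cv_const.
  exists L. intros N HN.
  rewrite (lsum_ext (fun x => Cnorm2 (cpx h x)) (fun x => h x * h x)).
  apply LU_level; auto. intros x Hx. rewrite Hh; auto; ring.
  intros x _. unfold Cnorm2, cpx. simpl. ring.
Qed.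

Lemma bv_l2 T (Hlf : locally_finite T) (Hll : leafless T) j : l2norm2 T (cpx (bv T j)) 1.
Proof.
  replace 1 with (lsum (fun x => bv T j x * bv T j x) (Lv T (levJ j))).
  apply level_l2; auto. intros; apply bv_supp; auto.
  rewrite ON; auto. apply d01_refl. apply JL_in; auto. apply JL_in; auto.
Qed.

Lemma Wchar T (Hlf : locally_finite T) (Hll : leafless T) f n i : in_l2 T f -> ortho T f (cpx (bv T (S n, i))) ->
  cf T (Re_ f) (S n, i) = 0 /\ cf T (Im_ f) (S n, i) = 0.
Proof.
  intros [l1 Hf] Ho. set (j := (S n, i)). set (L := levJ j).
  assert (Hc : exists N0, forall N, (N >= N0)%nat -> lsum (crR f (cpx (bv T j))) (LU T N) = cf T (Re_ f) j /\ lsum (crI f (cpx (bv T j))) (LU T N) = cf T (Im_ f) j).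
  { exists L. intros N HN. split.
    - rewrite (LU_level T Hlf _ L) by (auto; intros x Hx; unfold crR, cpx; simpl; rewrite bv_supp; auto; ring).
      unfold cf, crR, cpx, Re_. apply lsum_ext. intros; simpl; ring.
    - rewrite (LU_level T Hlf _ L) by (auto; intros x Hx; unfold crI, cpx; simpl; rewrite bv_supp; auto; ring).
      unfold cf, crI, cpx, Im_. apply lsum_ext. intros; simpl; ring. }
  pose proof (bv_l2 T Hlf Hll j) as Hb.
  split.
  - pose proof (norm_comb T Hlf f _ (1, 0) l1 1 _ _ Hf Hb Hc) as K.
    pose proof (Ho (1,0) _ _ _ Hf Hb K) as E. unfold Cnorm2 in E. simpl in E. lra.
  - pose proof (norm_comb T Hlf f _ (0, 1) l1 1 _ _ Hf Hb Hc) as K.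
    pose proof (Ho (0,1) _ _ _ Hf Hb K) as E. unfold Cnorm2 in E. simpl in E. lra.
Qed.

Lemma w_cross T (Hlf : locally_finite T) (Hll : leafless T) i i' : i <> i' -> forall N,
  lsum (crR (cpx (wv T i)) (cpx (wv T i'))) (LU T N) = 0 /\ lsum (crI (cpx (wv T i)) (cpx (wv T i'))) (LU T N) = 0.
Proof.
  intros Hne N. split.
  - rewrite lsum_LU. apply lsum_zero. intros n _.
    destruct (Nat.eq_dec n (levI i)) as [e1|e1]; [destruct (Nat.eq_dec n (levI i')) as [e2|e2]|].
    + subst n. rewrite (lsum_ext _ (fun x => bv T (O, i) x * bv T (O, i') x)) by (intros; unfold crR, cpx; simpl; rewrite !bv_0; ring).
      replace (levI i) with (levJ (O, i)) by reflexivity. rewrite ON; auto.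
      all: try (apply JL_in; auto; unfold levJ; simpl; lia).
      apply d01_ne. intros E; inversion E; auto.
    + apply lsum_zero. intros x Hx. apply Lv_in in Hx; auto. unfold crR, cpx; simpl.
      rewrite <- (bv_0 T i'). rewrite (bv_supp T Hlf (O, i')). ring. unfold levJ; simpl; lia.
    + apply lsum_zero. intros x Hx. apply Lv_in in Hx; auto. unfold crR, cpx; simpl.
      rewrite <- (bv_0 T i). rewrite (bv_supp T Hlf (O, i)). ring. unfold levJ; simpl; lia.
  - apply lsum_zero. intros x _. unfold crI, cpx; simpl. ring.
Qed.

Lemma w_ortho T (Hlf : locally_finite T) (Hll : leafless T) i i' : i <> i' -> ortho T (cpx (wv T i)) (cpx (wv T i')).
Proof. intros Hne. apply ortho_cross; auto. apply w_cross; auto. Qed.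

Lemma w_shR_level T (Hlf : locally_finite T) i h n : lsum (fun x => wv T i x * shR T h x) (Lv T n) = 0.
Proof.
  destruct n. simpl Lv. rewrite lsum_cons, lsum_nil. unfold shR. rewrite par_root. ring.
  apply inner_shR_w; auto.
Qed.

Lemma w_shift_cross T (Hlf : locally_finite T) (Hll : leafless T) i G : forall N,
  lsum (crR (cpx (wv T i)) (dirichlet_shift T 1 G)) (LU T N) = 0 /\ lsum (crI (cpx (wv T i)) (dirichlet_shift T 1 G)) (LU T N) = 0.
Proof.
  intros N. split; rewrite lsum_LU; apply lsum_zero; intros n _.
  - rewrite <- (w_shR_level T Hlf i (Re_ G) n). apply lsum_ext. intros x _. unfold crR, cpx. simpl.
    rewrite <- (ds_Re T Hlf Hll). unfold Re_. ring.
  - transitivity (-1 * lsum (fun x => wv T i x * shR T (Im_ G) x) (Lv T n)).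
    2:{ rewrite w_shR_level; auto. ring. }
    rewrite <- lsum_scal. apply lsum_ext. intros x _. unfold crI, cpx. simpl.
    rewrite <- (ds_Im T Hlf Hll). unfold Im_. ring.
Qed.

Lemma w_ortho_shift T (Hlf : locally_finite T) (Hll : leafless T) i G : ortho T (cpx (wv T i)) (dirichlet_shift T 1 G).
Proof. apply ortho_cross; auto. apply w_shift_cross; auto. Qed.

Lemma lsum_sq {A} (f : A -> R) l : lsum f l * lsum f l = lsum (fun k => lsum (fun k' => f k * f k') l) l.
Proof. rewrite <- lsum_scalr. apply lsum_ext. intros k _. rewrite <- lsum_scal. auto. Qed.

Lemma lsum_length {A} (l : list A) : lsum (fun _ => 1) l = INR (length l).
Proof. induction l. reflexivity. rewrite lsum_cons, IHl. simpl length. rewrite S_INR. ring. Qed.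

Lemma lsum_d01 {A} (l : list A) d (g : A -> R) : NoDup l -> In d l -> lsum (fun d' => d01 d d' * g d') l = g d.
Proof.
  intros Hn Hd. rewrite (lsum_single _ _ d); auto. rewrite d01_refl; ring.
  intros x _ Hx. rewrite d01_ne; auto. ring.
Qed.

Lemma sqnn (r : R) : 0 <= r * r. Proof. nra. Qed.

Lemma bessel_count {D K} (dl : list D) (kl : list K) (v : K -> D -> R) :
  NoDup dl -> NoDup kl -> (forall k k', In k kl -> In k' kl -> lsum (fun d => v k d * v k' d) dl = d01 k k') ->
  (length kl <= length dl)%nat.
Proof.
  intros Hd Hk Ho.
  assert (B : forall d, In d dl -> lsum (fun k => v k d * v k d) kl <= 1).
  { intros d Hdd. set (S0 := lsum (fun k => v k d * v k d) kl).
    set (E := lsum (fun d' => (d01 d d' - lsum (fun k => v k d * v k d') kl) * (d01 d d' - lsum (fun k => v k d * v k d') kl)) dl).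
    assert (E0 : 0 <= E) by (unfold E; apply lsum_nonneg; intros x _; apply sqnn).
    assert (E1 : E = 1 - S0).
    { unfold E. rewrite (lsum_ext _ (fun d' => d01 d d' * d01 d d' - 2 * (d01 d d' * lsum (fun k => v k d * v k d') kl) + lsum (fun k => v k d * v k d') kl * lsum (fun k => v k d * v k d') kl)) by (intros; ring).
      rewrite !lsum_plus, lsum_minus, lsum_scal.
      rewrite (lsum_d01 dl d (fun d' => d01 d d')) by auto. rewrite d01_refl.
      rewrite (lsum_d01 dl d (fun d' => lsum (fun k => v k d * v k d') kl)) by auto.
      rewrite (lsum_ext _ (fun d' => lsum (fun k => lsum (fun k' => (v k d * v k' d) * (v k d' * v k' d')) kl) kl)).
      2:{ intros d' _. rewrite lsum_sq. apply lsum_ext. intros. apply lsum_ext. intros. ring. }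
      rewrite (lsum_swap (fun d' k => lsum (fun k' => v k d * v k' d * (v k d' * v k' d')) kl) dl kl).
      rewrite (lsum_ext (fun k => lsum (fun d' => lsum (fun k' => v k d * v k' d * (v k d' * v k' d')) kl) dl) (fun k => lsum (fun k' => (v k d * v k' d) * d01 k k') kl)).
      2:{ intros k Hk1. rewrite (lsum_swap (fun d' k' => v k d * v k' d * (v k d' * v k' d')) dl kl). apply lsum_ext. intros k' Hk'. rewrite lsum_scal. rewrite Ho; auto. }
      rewrite (lsum_ext (fun k => lsum (fun k' => (v k d * v k' d) * d01 k k') kl) (fun k => v k d * v k d)).
      2:{ intros k Hk1. rewrite (lsum_ext _ (fun k' => d01 k k' * (v k d * v k' d))) by (intros; ring). rewrite lsum_d01; auto. }
      fold S0. ring. }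
    lra. }
  assert (T1 : lsum (fun k => lsum (fun d => v k d * v k d) dl) kl = INR (length kl)).
  { rewrite <- lsum_length. apply lsum_ext. intros k Hk1. rewrite Ho; auto. apply d01_refl. }
  rewrite lsum_swap in T1.
  assert (INR (length kl) <= INR (length dl)).
  { rewrite <- T1, <- lsum_length. apply lsum_le. auto. }
  apply INR_le; auto.
Qed.

Definition dbl {A} (l : list A) : list (A * bool) := flat_map (fun x => [(x, false); (x, true)]) l.

Lemma dbl_nd {A} (l : list A) : NoDup l -> NoDup (dbl l).
Proof.
  intros H. unfold dbl. apply NoDup_flat_map_c; auto.
  intros x _. constructor. intros [e|[]]; discriminate. constructor; [intros []|constructor].
  intros x y z _ _ [e|[e|[]]] [e'|[e'|[]]]; subst; inversion e'; auto.
Qed.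

Lemma dbl_len {A} (l : list A) : length (dbl l) = (2 * length l)%nat.
Proof. induction l; simpl; auto. unfold dbl in *. simpl. rewrite IHl. lia. Qed.

Lemma dbl_in {A} (l : list A) x b : In (x, b) (dbl l) <-> In x l.
Proof.
  unfold dbl. rewrite in_flat_map. split.
  - intros [y [Hy [e|[e|[]]]]]; inversion e; subst; auto.
  - intros H. exists x. split; auto. destruct b; simpl; auto.
Qed.

Lemma lsum_dbl {A} (g : A * bool -> R) l : lsum g (dbl l) = lsum (fun x => g (x, false) + g (x, true)) l.
Proof. unfold dbl. rewrite lsum_flat_map. apply lsum_ext. intros. rewrite !lsum_cons, lsum_nil. ring. Qed.

Definition K1 {T} (ls : list (excess T)) : list (I T) := None :: map Some ls.

Lemma K1_nd {T} (ls : list (excess T)) : NoDup ls -> NoDup (K1 ls).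
Proof.
  intros H. constructor. rewrite in_map_iff. intros [x [e _]]; discriminate.
  apply NoDup_map_inj; auto. intros x y e; inversion e; auto.
Qed.

Lemma K1_all {T} (ls : list (excess T)) : (forall e, In e ls) -> forall i, In i (K1 ls).
Proof. intros H [e|]. right. apply in_map; auto. left; auto. Qed.

Definition vec {T} (f : V T -> C) (d : I T * bool) : R :=
  if snd d then cf T (Im_ f) (O, fst d) else cf T (Re_ f) (O, fst d).
Definition vecJ {T} (f : V T -> C) (d : I T * bool) : R :=
  if snd d then cf T (Re_ f) (O, fst d) else - cf T (Im_ f) (O, fst d).

Definition Wv (T : rtree) (f : V T -> C) : Prop := forall n i, cf T (Re_ f) (S n, i) = 0 /\ cf T (Im_ f) (S n, i) = 0.

Definition ip {T} (ls : list (excess T)) (X Z : I T * bool -> R) : R := lsum (fun d => X d * Z d) (dbl (K1 ls)).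

Lemma rP T (Hlf : locally_finite T) (Hll : leafless T) (ls : list (excess T)) : NoDup ls -> (forall e, In e ls) ->
  forall f, Wv T f -> l2norm2 T f (ip ls (vec f) (vec f)).
Proof.
  intros Hnd Hcov f Hw. apply l2_JU; auto.
  set (KK := map (fun i => (O, i)) (K1 ls)).
  assert (HKK : NoDup KK) by (apply NoDup_map_inj; [intros x y e; inversion e; auto|apply K1_nd; auto]).
  assert (Hs : lsum (gC T f) KK = ip ls (vec f) (vec f)).
  { unfold KK, ip. rewrite lsum_map, lsum_dbl. apply lsum_ext. intros i _. unfold gC, vec. simpl. ring. }
  destruct (exh_list _ (JU_exh T Hlf) KK) as [N0 HN0].
  apply (cv_event (fun _ => ip ls (vec f) (vec f))). apply cv_const.
  exists N0. intros N HN. rewrite <- Hs. apply lsum_support; auto. apply exh_nd. apply JU_exh; auto.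
  eapply incl_tran; eauto. apply exh_le; auto. apply JU_exh; auto.
  intros [n i] _ Hn. destruct n.
  - exfalso. apply Hn. unfold KK. apply in_map. apply K1_all; auto.
  - unfold gC. destruct (Hw n i) as [E1 E2]. rewrite E1, E2. ring.
Qed.

Lemma Re_comb T (a : C) (h f : V T -> C) : Re_ (fun x => Cadd (Cmul a (h x)) (f x)) = (fun x => fst a * Re_ h x + (- snd a) * Im_ h x + Re_ f x).
Proof. extensionality x. unfold Re_, Im_, Cadd, Cmul. simpl. ring. Qed.
Lemma Im_comb T (a : C) (h f : V T -> C) : Im_ (fun x => Cadd (Cmul a (h x)) (f x)) = (fun x => fst a * Im_ h x + snd a * Re_ h x + Im_ f x).
Proof. extensionality x. unfold Re_, Im_, Cadd, Cmul. simpl. ring. Qed.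

Lemma vec_comb T (a : C) (h f : V T -> C) d : vec (fun x => Cadd (Cmul a (h x)) (f x)) d = fst a * vec h d + snd a * vecJ h d + vec f d.
Proof. unfold vec, vecJ. destruct d as [i []]; simpl; [rewrite Im_comb, cf_lin | rewrite Re_comb, cf_lin]; ring. Qed.

Lemma Wv_comb T (a : C) (h f : V T -> C) : Wv T h -> Wv T f -> Wv T (fun x => Cadd (Cmul a (h x)) (f x)).
Proof.
  intros H1 H2 n i. rewrite Re_comb, Im_comb, !cf_lin. destruct (H1 n i) as [a1 b1], (H2 n i) as [a2 b2].
  split; [rewrite a1, b1, a2 | rewrite a1, b1, b2]; ring.
Qed.

Lemma ip_comm {T} ls (X Z : I T * bool -> R) : ip ls X Z = ip ls Z X.
Proof. unfold ip. apply lsum_ext. intros; ring. Qed.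
Lemma ipJJ {T} ls (h f : V T -> C) : ip ls (vecJ h) (vecJ f) = ip ls (vec h) (vec f).
Proof. unfold ip. rewrite !lsum_dbl. apply lsum_ext. intros. unfold vec, vecJ; simpl. ring. Qed.
Lemma ipJ0 {T} ls (h : V T -> C) : ip ls (vec h) (vecJ h) = 0.
Proof. unfold ip. rewrite !lsum_dbl. apply lsum_zero. intros. unfold vec, vecJ; simpl. ring. Qed.
Lemma ipJa {T} ls (h f : V T -> C) : ip ls (vec h) (vecJ f) = - ip ls (vecJ h) (vec f).
Proof. unfold ip. rewrite !lsum_dbl. transitivity (-1 * lsum (fun x => vecJ h (x, false) * vec f (x, false) + vecJ h (x, true) * vec f (x, true)) (K1 ls)).
  rewrite <- lsum_scal. apply lsum_ext. intros. unfold vec, vecJ; simpl. ring. ring. Qed.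

Lemma ip_expand {T} ls (X Y Z : I T * bool -> R) (a1 a2 : R) :
  ip ls (fun d => a1 * X d + a2 * Y d + Z d) (fun d => a1 * X d + a2 * Y d + Z d) =
  a1 * a1 * ip ls X X + a2 * a2 * ip ls Y Y + ip ls Z Z + 2 * a1 * a2 * ip ls X Y + 2 * a1 * ip ls X Z + 2 * a2 * ip ls Y Z.
Proof.
  unfold ip. rewrite <- !lsum_scal, <- !lsum_plus. apply lsum_ext. intros; ring.
Qed.

Lemma ortho_ips T (Hlf : locally_finite T) (Hll : leafless T) (ls : list (excess T)) : NoDup ls -> (forall e, In e ls) ->
  forall f h, Wv T f -> Wv T h -> ortho T f h -> ip ls (vec h) (vec h) = 1 ->
  ip ls (vec h) (vec f) = 0 /\ ip ls (vecJ h) (vec f) = 0.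
Proof.
  intros Hnd Hcov f h Hf Hh Ho Hn.
  assert (K : forall a : C, ip ls (vec (fun x => Cadd (Cmul a (h x)) (f x))) (vec (fun x => Cadd (Cmul a (h x)) (f x))) = ip ls (vec f) (vec f) + Cnorm2 a * ip ls (vec h) (vec h)).
  { intros a. apply (Ho a); apply rP; auto. apply Wv_comb; auto. }
  assert (K2 : forall a : C, ip ls (vec (fun x => Cadd (Cmul a (h x)) (f x))) (vec (fun x => Cadd (Cmul a (h x)) (f x))) =
     ip ls (fun d => fst a * vec h d + snd a * vecJ h d + vec f d) (fun d => fst a * vec h d + snd a * vecJ h d + vec f d)).
  { intros a. unfold ip. apply lsum_ext. intros. rewrite vec_comb. auto. }
  pose proof (K (1,0)) as A1. rewrite K2, ip_expand in A1. pose proof (K (0,1)) as A2. rewrite K2, ip_expand in A2.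
  rewrite ipJJ, ipJ0, Hn in A1, A2. unfold Cnorm2 in A1, A2. simpl in A1, A2. split; lra.
Qed.

Lemma core T (Hlf : locally_finite T) (Hll : leafless T) (ls : list (excess T)) : NoDup ls -> (forall e, In e ls) ->
  forall {Kt} (kl : list Kt) (F : Kt -> V T -> C), NoDup kl ->
  (forall k, In k kl -> l2norm2 T (F k) 1) -> (forall k k', In k kl -> In k' kl -> k <> k' -> ortho T (F k) (F k')) ->
  (forall k, In k kl -> Wv T (F k)) -> (length kl <= S (length ls))%nat.
Proof.
  intros Hnd Hcov Kt kl F Hkl Hn Ho Hw.
  assert (N1 : forall k, In k kl -> ip ls (vec (F k)) (vec (F k)) = 1).
  { intros k Hk. pose proof (rP T Hlf Hll ls Hnd Hcov (F k) (Hw k Hk)). unfold l2norm2 in *. pose proof (Hn k Hk) as Hk1. unfold l2norm2 in Hk1. eapply uniqueness_sum; eauto. }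
  set (v := fun (kb : Kt * bool) => if snd kb then vecJ (F (fst kb)) else vec (F (fst kb))).
  cut (length (dbl kl) <= length (dbl (K1 ls)))%nat.
  { rewrite !dbl_len. unfold K1. simpl length. rewrite length_map. lia. }
  apply (bessel_count (dbl (K1 ls)) (dbl kl) v). apply dbl_nd, K1_nd; auto. apply dbl_nd; auto.
  intros [k b] [k' b'] Hk Hk'. apply dbl_in in Hk, Hk'. change (lsum (fun d => v (k, b) d * v (k', b') d) (dbl (K1 ls))) with (ip ls (v (k, b)) (v (k', b'))).
  destruct (cdec k k') as [e|ne].
  - subst k'. destruct b, b'; unfold v; cbn [fst snd].
    + rewrite ipJJ, N1 by auto. rewrite d01_refl. auto.
    + rewrite ip_comm, ipJ0. rewrite d01_ne; auto. intro E; inversion E.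
    + rewrite ipJ0. rewrite d01_ne; auto. intro E; inversion E.
    + rewrite N1 by auto. rewrite d01_refl. auto.
  - rewrite d01_ne by (intro E; inversion E; auto).
    destruct (ortho_ips T Hlf Hll ls Hnd Hcov (F k) (F k') (Hw k Hk) (Hw k' Hk') (Ho k k' Hk Hk' ne) (N1 k' Hk')) as [P1 P2].
    assert (ne' : k' <> k) by auto.
    destruct (ortho_ips T Hlf Hll ls Hnd Hcov (F k') (F k) (Hw k' Hk') (Hw k Hk) (Ho k' k Hk' Hk ne') (N1 k Hk)) as [P3 P4].
    destruct b, b'; unfold v; cbn [fst snd].
    + rewrite ipJJ. auto.
    + auto.
    + rewrite ip_comm. auto.
    + auto.
Qed.

Definition Ulin (T1 T2 : rtree) (U : (V T1 -> C) -> (V T2 -> C)) : Prop :=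
  forall (a : C) f g, in_l2 T1 f -> in_l2 T1 g ->
       forall u, U (fun x => Cadd (Cmul a (f x)) (g x)) u = Cadd (Cmul a (U f u)) (U g u).
Definition Unorm (T1 T2 : rtree) (U : (V T1 -> C) -> (V T2 -> C)) : Prop :=
  forall f l, in_l2 T1 f -> l2norm2 T1 f l -> l2norm2 T2 (U f) l.

Lemma l2_uniq T f l l' : l2norm2 T f l -> l2norm2 T f l' -> l = l'.
Proof. unfold l2norm2. apply uniqueness_sum. Qed.

Lemma transfer_back T1 T2 U (HL : Ulin T1 T2 U) (HN : Unorm T1 T2 U) f h :
  in_l2 T1 f -> in_l2 T1 h -> ortho T2 (U f) (U h) -> ortho T1 f h.
Proof.
  intros Hf Hh Ho a l1 l2 l3 H1 H2 H3.
  apply (Ho a); try (apply HN; auto).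
  assert (E : U (fun x => Cadd (Cmul a (h x)) (f x)) = (fun x => Cadd (Cmul a (U h x)) (U f x))).
  { extensionality u. apply HL; auto. }
  rewrite <- E. apply HN; auto. exists l3; auto.
Qed.

Lemma transfer_fwd T1 T2 U (HL : Ulin T1 T2 U) (HN : Unorm T1 T2 U) f h :
  in_l2 T1 f -> in_l2 T1 h -> (forall a, in_l2 T1 (fun x => Cadd (Cmul a (h x)) (f x))) ->
  ortho T1 f h -> ortho T2 (U f) (U h).
Proof.
  intros [l1' Hf] [l2' Hh] Hc Ho a l1 l2 l3 H1 H2 H3.
  assert (l1 = l1') by (apply (l2_uniq T2 (U f)); auto; apply HN; auto; try (exists l1'; auto)).
  assert (l2 = l2') by (apply (l2_uniq T2 (U h)); auto; apply HN; auto; try (exists l2'; auto)). subst.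
  destruct (Hc a) as [l3' H3'].
  assert (E : U (fun x => Cadd (Cmul a (h x)) (f x)) = (fun x => Cadd (Cmul a (U h x)) (U f x))).
  { extensionality u. apply HL; [exists l2'|exists l1']; auto. }
  assert (l3 = l3'). { apply (l2_uniq T2 (fun x => Cadd (Cmul a (U h x)) (U f x))); auto. rewrite <- E. apply HN; auto; exists l3'; auto. }
  subst. apply (Ho a); auto.
Qed.

Lemma ds_cpx T (Hlf : locally_finite T) (Hll : leafless T) (h : V T -> R) : dirichlet_shift T 1 (cpx h) = cpx (shR T h).
Proof.
  extensionality u. unfold dirichlet_shift, cpx, shR. destruct (par T u); [|reflexivity].
  rewrite dweight1 by auto. unfold Cmul, RtoC. simpl. f_equal; unfold Rdiv; ring.
Qed.

Lemma shift_psum T (Hlf : locally_finite T) (Hll : leafless T) G N :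
  lsum (fun x => Cnorm2 (dirichlet_shift T 1 G x)) (LU T (S N)) = lsum (fun x => Cnorm2 (G x)) (LU T N).
Proof.
  rewrite !lsum_LU. change (seq 0 (S (S N))) with (0%nat :: seq 1 (S N)). rewrite lsum_cons.
  rewrite <- seq_shift, lsum_map.
  replace (lsum (fun x => Cnorm2 (dirichlet_shift T 1 G x)) (Lv T 0)) with 0.
  2:{ simpl Lv. rewrite lsum_cons, lsum_nil. unfold dirichlet_shift. rewrite par_root. unfold Cnorm2, C0. simpl. ring. }
  rewrite Rplus_0_l. apply lsum_ext. intros n _.
  rewrite (lsum_ext _ (fun x => shR T (Re_ G) x * shR T (Re_ G) x + shR T (Im_ G) x * shR T (Im_ G) x)).
  - rewrite lsum_plus, !shR_inner by auto. rewrite <- lsum_plus. apply lsum_ext. intros. unfold Cnorm2, Re_, Im_. ring.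
  - intros x _. rewrite <- (ds_Re T Hlf Hll), <- (ds_Im T Hlf Hll). unfold Cnorm2, Re_, Im_. ring.
Qed.

Lemma shift_l2 T (Hlf : locally_finite T) (Hll : leafless T) G l : l2norm2 T G l -> l2norm2 T (dirichlet_shift T 1 G) l.
Proof.
  intros H. apply l2_LU in H; auto. apply l2_LU; auto.
  intros e He. destruct (H e He) as [M HM]. exists (S M). intros n Hn. destruct n; [lia|].
  rewrite shift_psum by auto. apply HM. lia.
Qed.

Lemma comb_l2 T (Hlf : locally_finite T) f h : in_l2 T f -> in_l2 T h ->
  (forall N, lsum (crR f h) (LU T N) = 0 /\ lsum (crI f h) (LU T N) = 0) ->
  forall a, in_l2 T (fun x => Cadd (Cmul a (h x)) (f x)).
Proof.
  intros [l1 H1] [l2 H2] Hc a. eexists. apply (norm_comb T Hlf f h a l1 l2 0 0); auto. exists O; intros; apply Hc.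
Qed.

Lemma cpx_wv_l2 T (Hlf : locally_finite T) (Hll : leafless T) i : l2norm2 T (cpx (wv T i)) 1.
Proof. exact (bv_l2 T Hlf Hll (O, i)). Qed.

Lemma K1_len {T} (l : list (excess T)) : length (K1 l) = S (length l).
Proof. unfold K1. simpl. rewrite length_map. auto. Qed.

Lemma cpx_bv_S T (Hlf : locally_finite T) (Hll : leafless T) n i :
  cpx (bv T (S n, i)) = dirichlet_shift T 1 (cpx (bv T (n, i))).
Proof. rewrite ds_cpx by auto. rewrite bv_S. auto. Qed.

Lemma caseA T1 T2 (Hlf1 : locally_finite T1) (Hll1 : leafless T1) (Hlf2 : locally_finite T2) (Hll2 : leafless T2)
  (U : (V T1 -> C) -> (V T2 -> C)) (HL : Ulin T1 T2 U) (HN : Unorm T1 T2 U)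
  (HS : forall g, in_l2 T2 g -> exists f, in_l2 T1 f /\ forall u, U f u = g u)
  (HC : forall f, in_l2 T1 f -> forall u, U (dirichlet_shift T1 1 f) u = dirichlet_shift T2 1 (U f) u)
  (ls1 : list (excess T1)) (Hn1 : NoDup ls1) (Hc1 : forall e, In e ls1)
  (l2 : list (excess T2)) (Hn2 : NoDup l2) : (length l2 <= length ls1)%nat.
Proof.
  set (F := fun k : I T2 => epsilon (inhabits (fun _ : V T1 => C0)) (fun f => in_l2 T1 f /\ forall u, U f u = cpx (wv T2 k) u)).
  assert (FS : forall k, in_l2 T1 (F k) /\ forall u, U (F k) u = cpx (wv T2 k) u).
  { intros k. unfold F. apply epsilon_spec. apply HS. exists 1. apply cpx_wv_l2; auto. }
  assert (FU : forall k, U (F k) = cpx (wv T2 k)). { intros k. extensionality u. apply FS. }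
  cut (length (K1 l2) <= S (length ls1))%nat. rewrite K1_len. lia.
  apply (core T1 Hlf1 Hll1 ls1 Hn1 Hc1 (K1 l2) F). apply K1_nd; auto.
  - intros k _. destruct (proj1 (FS k)) as [l Hl]. assert (HU := HN _ _ (proj1 (FS k)) Hl). rewrite FU in HU.
    rewrite (l2_uniq _ _ _ _ Hl (proj1 (FS k)) (cpx_wv_l2 T2 Hlf2 Hll2 k)) in HU || idtac.
    replace l with 1 in Hl. auto. apply (l2_uniq T2 (cpx (wv T2 k))); auto. apply cpx_wv_l2; auto.
  - intros k k' _ _ Hne. apply (transfer_back T1 T2 U HL HN); try apply FS. rewrite !FU. apply w_ortho; auto.
  - intros k _ n i. apply Wchar; auto. apply FS.
    apply (transfer_back T1 T2 U HL HN). apply FS. exists 1. apply bv_l2; auto.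
    rewrite FU. rewrite cpx_bv_S by auto.
    assert (E : U (dirichlet_shift T1 1 (cpx (bv T1 (n, i)))) = dirichlet_shift T2 1 (U (cpx (bv T1 (n, i))))).
    { extensionality u. apply HC. exists 1. apply bv_l2; auto. }
    rewrite E. apply w_ortho_shift; auto.
Qed.

Lemma caseB T1 T2 (Hlf1 : locally_finite T1) (Hll1 : leafless T1) (Hlf2 : locally_finite T2) (Hll2 : leafless T2)
  (U : (V T1 -> C) -> (V T2 -> C)) (HI : forall f, in_l2 T1 f -> in_l2 T2 (U f)) (HL : Ulin T1 T2 U) (HN : Unorm T1 T2 U)
  (HS : forall g, in_l2 T2 g -> exists f, in_l2 T1 f /\ forall u, U f u = g u)
  (HC : forall f, in_l2 T1 f -> forall u, U (dirichlet_shift T1 1 f) u = dirichlet_shift T2 1 (U f) u)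
  (ls2 : list (excess T2)) (Hn2 : NoDup ls2) (Hc2 : forall e, In e ls2)
  (l1 : list (excess T1)) (Hn1 : NoDup l1) : (length l1 <= length ls2)%nat.
Proof.
  set (F := fun k : I T1 => U (cpx (wv T1 k))).
  assert (Wl : forall k, in_l2 T1 (cpx (wv T1 k))) by (intros k; exists 1; apply cpx_wv_l2; auto).
  cut (length (K1 l1) <= S (length ls2))%nat. rewrite K1_len. lia.
  apply (core T2 Hlf2 Hll2 ls2 Hn2 Hc2 (K1 l1) F). apply K1_nd; auto.
  - intros k _. apply HN; auto. apply cpx_wv_l2; auto.
  - intros k k' _ _ Hne. apply (transfer_fwd T1 T2 U HL HN); auto.
    apply comb_l2; auto. apply w_cross; auto. apply w_ortho; auto.
  - intros k _ n i. apply Wchar; auto. apply HI; auto.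
    destruct (HS (cpx (bv T2 (n, i)))) as [G [HG HGU]]. exists 1; apply bv_l2; auto.
    rewrite cpx_bv_S by auto.
    assert (E : dirichlet_shift T2 1 (cpx (bv T2 (n, i))) = U (dirichlet_shift T1 1 G)).
    { extensionality u. rewrite HC by auto. f_equal. extensionality x. rewrite HGU. auto. }
    rewrite E. unfold F. apply (transfer_fwd T1 T2 U HL HN); auto.
    + destruct HG as [l Hl]. exists l. apply shift_l2; auto.
    + apply comb_l2; auto. destruct HG as [l Hl]. exists l. apply shift_l2; auto. apply w_shift_cross; auto.
    + apply w_ortho_shift; auto.
Qed.

Lemma least (Q : nat -> Prop) : (exists n, Q n) -> exists x, Q x /\ forall y, Q y -> (x <= y)%nat.
Proof.
  intros H. destruct (dec_inh_nat_subset_has_unique_least_element Q (fun n => classic (Q n)) H) as [x [[H1 H2] _]].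
  exists x; auto.
Qed.

Lemma fin_of_bounded {A} (m : nat) : (forall l : list A, NoDup l -> (length l <= m)%nat) -> exists l : list A, NoDup l /\ forall x, In x l.
Proof.
  intros H. assert (K : forall d (l : list A), NoDup l -> (m - length l <= d)%nat -> exists l0 : list A, NoDup l0 /\ forall x, In x l0).
  { induction d; intros l Hl Hd.
    - destruct (classic (forall x, In x l)) as [c|c]; [eauto|]. apply not_all_ex_not in c. destruct c as [x Hx].
      assert (NoDup (x :: l)) by (constructor; auto). apply H in H0. apply H in Hl. simpl in H0. lia.
    - destruct (classic (forall x, In x l)) as [c|c]; [eauto|]. apply not_all_ex_not in c. destruct c as [x Hx].
      apply (IHd (x :: l)). constructor; auto. assert (NoDup (x :: l)) by (constructor; auto). apply H in H0. simpl in *. lia. }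
  apply (K m []). constructor. simpl. lia.
Qed.

Lemma pos_nth_inv {A} (l : list A) (d : A) p : NoDup l -> (p < length l)%nat -> pos (nth p l d) l = p.
Proof.
  intros Hn Hp. pose proof (pos_nth l d (nth p l d)) as H. assert (Hi : In (nth p l d) l) by (apply nth_In; auto).
  specialize (H Hi). apply (proj1 (NoDup_nth l d) Hn) in H; auto. apply pos_lt; auto.
Qed.

Lemma fin_bij {A B} (la : list A) (lb : list B) : NoDup la -> (forall x, In x la) -> NoDup lb -> (forall y, In y lb) ->
  length la = length lb -> same_card A B.
Proof.
  intros Ha Hca Hb Hcb Hl. destruct lb as [|b0 lb'].
  - destruct la as [|a0 la']; [|discriminate].
    exists (fun a => False_rect _ (Hca a)). exists (fun b => False_rect _ (Hcb b)). split; intros x; destruct (Hca x) || destruct (Hcb x).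
  - destruct la as [|a0 la']; [discriminate|].
    set (la := a0 :: la') in *. set (lb := b0 :: lb') in *.
    exists (fun a => nth (pos a la) lb b0). exists (fun b => nth (pos b lb) la a0). split.
    + intros a. rewrite pos_nth_inv; auto. apply pos_nth; auto. rewrite <- Hl. apply pos_lt; auto.
    + intros b. rewrite pos_nth_inv; auto. apply pos_nth; auto. rewrite Hl. apply pos_lt; auto.
Qed.

Lemma same_card_sym {A B} : same_card A B -> same_card B A.
Proof. intros [f [g [H1 H2]]]. exists g, f. auto. Qed.

Lemma same_card_trans {A B C} : same_card A B -> same_card B C -> same_card A C.
Proof.
  intros [f [g [H1 H2]]] [f' [g' [H1' H2']]]. exists (fun a => f' (f a)), (fun c => g (g' c)). split; intros.
  rewrite H1', H1; auto. rewrite H2, H2'; auto.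
Qed.

Lemma count_nat {A} (iota : A -> nat) : (forall a b, iota a = iota b -> a = b) -> ~ (exists l, forall x : A, In x l) -> same_card A nat.
Proof.
  intros Hi Hinf. set (P := fun n => exists a, iota a = n).
  assert (Unb : forall N, exists n, (N <= n)%nat /\ P n).
  { intros N. apply NNPP. intros Hc. apply Hinf.
    exists (flat_map (fun n => match excluded_middle_informative (P n) with
                               | left h => [proj1_sig (constructive_indefinite_description _ h)] | right _ => [] end) (seq 0 N)).
    intros x. apply in_flat_map. exists (iota x). split.
    - apply in_seq. split; [lia|]. destruct (Nat.lt_ge_cases (iota x) N); auto. exfalso. apply Hc. exists (iota x). split; auto. exists x; auto.
    - destruct (excluded_middle_informative (P (iota x))) as [h|h]. 2:{ exfalso. apply h. exists x; auto. }
      destruct (constructive_indefinite_description _ h) as [y Hy]. simpl. left. apply Hi; auto. }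
  set (mu := fun (Q : nat -> Prop) => epsilon (inhabits O) (fun x => Q x /\ forall y, Q y -> (x <= y)%nat)).
  assert (Hmu : forall Q, (exists n, Q n) -> Q (mu Q) /\ forall y, Q y -> (mu Q <= y)%nat).
  { intros Q HQ. unfold mu. apply epsilon_spec. apply least; auto. }
  set (s := fix s (n : nat) : nat := match n with O => mu P | S k => mu (fun x => P x /\ (s k < x)%nat) end).
  assert (Hs : forall n, P (s n) /\ (forall n', n = S n' -> (s n' < s n)%nat)).
  { induction n.
    - split. apply Hmu. destruct (Unb O) as [n [_ Hn]]; eauto. intros; discriminate.
    - destruct (Unb (S (s n))) as [m [Hm1 Hm2]].
      destruct (Hmu (fun x => P x /\ (s n < x)%nat)) as [[H1 H2] _]. exists m; split; auto; lia.
      split; auto. intros n' e. inversion e; subst. auto. }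
  assert (Smono : forall n m, (n < m)%nat -> (s n < s m)%nat).
  { intros n m Hnm. induction Hnm. apply (proj2 (Hs (S n))); auto. pose proof (proj2 (Hs (S m)) m eq_refl). lia. }
  assert (Sinj : forall n m, s n = s m -> n = m).
  { intros n m e. destruct (Nat.lt_trichotomy n m) as [h|[h|h]]; auto; apply Smono in h; lia. }
  assert (Sge : forall n, (n <= s n)%nat).
  { induction n. lia. pose proof (Smono n (S n) ltac:(lia)). lia. }
  assert (Ssurj : forall x, P x -> exists n, s n = x).
  { intros x Px. destruct (least (fun k => (x <= s k)%nat)) as [k [Hk1 Hk2]]. exists x; apply Sge.
    exists k. destruct k.
    - apply Nat.le_antisymm; auto. apply (Hmu P). exists x; auto. auto.
    - destruct (Nat.le_gt_cases x (s k)) as [h|h]. specialize (Hk2 k h). lia.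
      apply Nat.le_antisymm; auto.
      change (s (S k)) with (mu (fun x => P x /\ (s k < x)%nat)). apply (Hmu (fun x => P x /\ (s k < x)%nat)).
      exists x; auto. split; auto. }
  assert (HA : exists a : A, True).
  { apply NNPP. intros Hc. apply Hinf. exists []. intros x. apply Hc. exists x; auto. }
  destruct HA as [a0 _].
  set (to := fun a => epsilon (inhabits O) (fun n => s n = iota a)).
  set (fr := fun n => epsilon (inhabits a0) (fun a => iota a = s n)).
  assert (Hto : forall a, s (to a) = iota a). { intros a. unfold to. apply epsilon_spec. apply Ssurj. exists a; auto. }
  assert (Hfr : forall n, iota (fr n) = s n). { intros n. unfold fr. apply epsilon_spec. apply (proj1 (Hs n)). }
  exists to, fr. split.
  - intros a. apply Hi. rewrite Hfr, Hto. auto.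
  - intros n. apply Sinj. rewrite Hto, Hfr. auto.
Qed.

Definition idx (T : rtree) (v : V T) : nat := epsilon (inhabits O) (fun n => enum T n = v).
Lemma idx_spec T v : enum T (idx T v) = v.
Proof. unfold idx. apply epsilon_spec. apply enum_surj. Qed.

Definition iota_ex (T : rtree) (e : excess T) : nat := idx T (nth (S (ex_j e)) (ch T (ex_v e)) (root T)).

Lemma iota_inj T (Hlf : locally_finite T) e e' : iota_ex T e = iota_ex T e' -> e = e'.
Proof.
  unfold iota_ex. intros H. assert (H' := f_equal (enum T) H). rewrite !idx_spec in H'.
  pose proof (ex_bound e) as B1. pose proof (ex_bound e') as B2. rewrite card_ch in B1, B2.
  assert (I1 : In (nth (S (ex_j e)) (ch T (ex_v e)) (root T)) (ch T (ex_v e))) by (apply nth_In; lia).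
  assert (I2 : In (nth (S (ex_j e')) (ch T (ex_v e')) (root T)) (ch T (ex_v e'))) by (apply nth_In; lia).
  rewrite H' in I1. apply (ch_in T Hlf) in I1, I2. rewrite I1 in I2. inversion I2 as [Ev].
  apply ex_eq; auto. rewrite Ev in H'.
  apply (proj1 (NoDup_nth (ch T (ex_v e')) (root T)) (ch_nd T Hlf _)) in H'; try lia.
  all: try lia. rewrite <- Ev; lia.
Qed.

Lemma nodup_cover {A} (l : list A) : (forall x, In x l) -> NoDup (nodup cdec l) /\ forall x, In x (nodup cdec l).
Proof. intros H. split. apply NoDup_nodup. intros x. apply nodup_In. auto. Qed.

Theorem mainTheorem2 (T1 T2 : rtree) :
  locally_finite T1 -> leafless T1 ->
  locally_finite T2 -> leafless T2 ->
  (unitarily_equivalent T1 T2 (dirichlet_shift T1 1) (dirichlet_shift T2 1)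
   <-> same_card (excess T1) (excess T2)).
Proof.
  intros Hlf1 Hll1 Hlf2 Hll2. split.
  - intros [U [HI [HL [HN [HS HC]]]]].
    destruct (classic (exists l : list (excess T1), forall x, In x l)) as [[l1 Hl1]|Hinf1].
    + destruct (nodup_cover l1 Hl1) as [Hn1 Hc1]. set (ls1 := nodup cdec l1) in *.
      destruct (fin_of_bounded (length ls1) (fun l2 Hn2 => caseA T1 T2 Hlf1 Hll1 Hlf2 Hll2 U HL HN HS HC ls1 Hn1 Hc1 l2 Hn2)) as [ls2 [Hn2 Hc2]].
      apply (fin_bij ls1 ls2); auto.
      apply Nat.le_antisymm.
      * apply (caseB T1 T2 Hlf1 Hll1 Hlf2 Hll2 U HI HL HN HS HC ls2 Hn2 Hc2 ls1 Hn1).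
      * apply (caseA T1 T2 Hlf1 Hll1 Hlf2 Hll2 U HL HN HS HC ls1 Hn1 Hc1 ls2 Hn2).
    + assert (Hinf2 : ~ (exists l : list (excess T2), forall x, In x l)).
      { intros [l2 Hl2]. destruct (nodup_cover l2 Hl2) as [Hn2 Hc2]. apply Hinf1.
        destruct (fin_of_bounded (length (nodup cdec l2)) (fun l1 Hn1 => caseB T1 T2 Hlf1 Hll1 Hlf2 Hll2 U HI HL HN HS HC _ Hn2 Hc2 l1 Hn1)) as [ls1 [_ Hc1]].
        eauto. }
      apply (same_card_trans (B := nat)).
      * apply (count_nat (iota_ex T1)); auto. apply iota_inj; auto.
      * apply same_card_sym. apply (count_nat (iota_ex T2)); auto. apply iota_inj; auto.
  - apply backward; auto.
Qed.
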